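(* Let $G$ be a graph with no induced $P_7$, $C_4$, $C_6$ or $C_7$, let $H=(B_1,\dots,B_5)$ be a maximal nice blowup of $C_5$ in $G$, let $i\in\{1,\dots,5\}$, and let $K$ be a connected subgraph of $G[A_2(i)]$. Then $K$ is anticomplete to $A_3(i)$ or to $A_3(i+1)$.
   Context: Indices modulo $5$. A nice blowup of $C_5$ is a tuple $(B_1,\dots,B_5)$ of pairwise disjoint cliques such that every vertex of $B_i$ has a neighbor in $B_{i-1}$ and in $B_{i+1}$, $B_i$ is anticomplete to $B_{i+2}$, and there are no $a\in B_i$, distinct $b,c\in B_{i+1}$, $d\in B_{i+2}$ with $G[\{a,b,c,d\}]\cong P_4$; $V(H)=\bigcup B_j$; maximal means no nice blowup has vertex set strictly containing $V(H)$. For $v\notin V(H)$, $\operatorname{supp}(v)$ is the set of $j$ with $v$ having a neighbor in $B_j$. $A_2(i)$ is the set of $v\notin V(H)$ with $\operatorname{supp}(v)=\{i,i+1\}$; $A_3(i)$ the set with $\operatorname{supp}(v)=\{i-1,i,i+1\}$. *)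

(* Defs.v *)
From mathcomp Require Import all_boot all_order.
Set Implicit Arguments. Unset Strict Implicit. Unset Printing Implicit Defensive.

Definition simple_graph (T : finType) (e : rel T) : Prop :=
  symmetric e /\ irreflexive e.

Section Graphs.
Variables (T : finType) (e : rel T).

Definition induced_path_map k (f : 'I_k -> T) : Prop :=
  injective f /\
  forall i j : 'I_k, e (f i) (f j) = ((i.+1 == j :> nat) || (j.+1 == i :> nat)).

Definition induced_cycle_map k (f : 'I_k -> T) : Prop :=
  injective f /\
  forall i j : 'I_k, e (f i) (f j) = ((j == ordS i) || (i == ordS j)).

Definition has_induced_P k : Prop := exists f : 'I_k -> T, induced_path_map f.
Definition has_induced_C k : Prop := exists f : 'I_k -> T, induced_cycle_map f.

Definition induces_P k (S : {set T}) : Prop :=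
  exists f : 'I_k -> T, induced_path_map f /\ [set f x | x : 'I_k] = S.

Definition clique (S : {set T}) : Prop :=
  forall x y, x \in S -> y \in S -> x != y -> e x y.

Definition anticomplete (X Y : {set T}) : Prop :=
  forall x y, x \in X -> y \in Y -> ~~ e x y.

Definition induced_connected (K : {set T}) : Prop :=
  forall x y, x \in K -> y \in K ->
    connect (fun u v => [&& u \in K, v \in K & e u v]) x y.

(* Blowups of C_5: indices are 'I_5, taken modulo 5 via ordS / ord_pred. *)
Definition nice_blowup (B : 'I_5 -> {set T}) : Prop :=
  [/\ (forall i j, i != j -> [disjoint B i & B j]),
      (forall i, clique (B i)),
      (forall i v, v \in B i ->
         (exists2 u, u \in B (ord_pred i) & e v u) /\
         (exists2 u, u \in B (ordS i) & e v u)),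
      (forall i, anticomplete (B i) (B (ordS (ordS i)))) &
      (forall i a b c d, a \in B i -> b \in B (ordS i) -> c \in B (ordS i) ->
         b != c -> d \in B (ordS (ordS i)) -> ~ induces_P 4 [set a; b; c; d])].

Definition blowup_vertices (B : 'I_5 -> {set T}) : {set T} :=
  \bigcup_(j < 5) B j.

Definition maximal_nice_blowup (B : 'I_5 -> {set T}) : Prop :=
  nice_blowup B /\
  ~ exists B' : 'I_5 -> {set T},
      nice_blowup B' /\ blowup_vertices B \proper blowup_vertices B'.

Definition supp (B : 'I_5 -> {set T}) (v : T) : {set 'I_5} :=
  [set j | [exists u in B j, e v u]].

Definition A2 (B : 'I_5 -> {set T}) (i : 'I_5) : {set T} :=
  [set v | (v \notin blowup_vertices B) && (supp B v == [set i; ordS i])].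

Definition A3 (B : 'I_5 -> {set T}) (i : 'I_5) : {set T} :=
  [set v | (v \notin blowup_vertices B) &&
           (supp B v == [set ord_pred i; i; ordS i])].

End Graphs.

(* Main.v *)
Require Import Defs.
From mathcomp Require Import all_boot all_order.
Set Implicit Arguments. Unset Strict Implicit. Unset Printing Implicit Defensive.

Lemma ordS5 (j : 'I_5) : ordS (ordS (ordS (ordS (ordS j)))) = j.
Proof. by apply: val_inj; case: j => [[|[|[|[|[|]]]]] ?]. Qed.

Section G.
Variables (T : finType) (e : rel T).
Hypothesis esym : symmetric e.
Hypothesis eirr : irreflexive e.

Lemma sE a b : e a b -> e b a. Proof. by rewrite esym. Qed.
Lemma sN a b : ~~ e a b -> ~~ e b a. Proof. by rewrite esym. Qed.
Lemma ne_by z a c : e z a -> ~~ e z c -> a != c.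
Proof. by move=> h1 h2; apply/eqP => E; subst; rewrite h1 in h2. Qed.

Ltac econtra :=
  match goal with
  | H : is_true (e ?a ?a) |- _ => by rewrite eirr in H
  | H1 : is_true (e ?a ?b), H2 : is_true (~~ e ?a ?b) |- _ => by rewrite H1 in H2
  | H1 : is_true (e ?a ?b), H2 : is_true (~~ e ?b ?a) |- _ => by rewrite esym H1 in H2
  end.
Ltac neq_tac := apply/eqP => Heq; subst; econtra.
Ltac efact :=
  match goal with
  | |- e ?a ?b = ?r => let b' := eval compute in r in change r with b'; efact0
  end
with efact0 :=
  match goal with
  | |- e ?a ?b = true => first [ assumption | by rewrite esym ]
  | |- e ?a ?b = false => first [ by rewrite eirr | apply/negbTE; first [ assumption | by rewrite esym ] ]
  end.

Lemma mkC4 a b c d : a != c -> b != d ->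
  e a b -> e b c -> e c d -> e d a -> ~~ e a c -> ~~ e b d ->
  has_induced_C e 4.
Proof.
move=> ac bd h1 h2 h3 h4 n1 n2.
have U : uniq [:: a; b; c; d].
  rewrite /= !inE !negb_or !andbT.
  have ab : a != b by neq_tac.
  have ad : a != d by neq_tac.
  have bc : b != c by neq_tac.
  have cd : c != d by neq_tac.
  by rewrite ab ac ad bc bd cd.
exists (fun i : 'I_4 => nth a [:: a; b; c; d] i); split.
  move=> i j /eqP; rewrite nth_uniq ?size_tuple //= => /eqP; exact: val_inj.
move=> [[|[|[|[|//]]]] Hi] [[|[|[|[|//]]]] Hj] /=; efact.
Qed.

Lemma mkC6 v0 v1 v2 v3 v4 v5 :
  e v0 v1 -> e v1 v2 -> e v2 v3 -> e v3 v4 -> e v4 v5 -> e v5 v0 ->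
  ~~ e v0 v2 -> ~~ e v0 v3 -> ~~ e v0 v4 -> ~~ e v1 v3 -> ~~ e v1 v4 -> ~~ e v1 v5 ->
  ~~ e v2 v4 -> ~~ e v2 v5 -> ~~ e v3 v5 ->
  has_induced_C e 6.
Proof.
move=> h1 h2 h3 h4 h5 h6 n1 n2 n3 n4 n5 n6 n7 n8 n9.
have U : uniq [:: v0; v1; v2; v3; v4; v5].
  rewrite /= !inE !negb_or !andbT.
  repeat (apply/andP; split); neq_tac.
exists (fun i : 'I_6 => nth v0 [:: v0; v1; v2; v3; v4; v5] i); split.
  move=> i j /eqP; rewrite nth_uniq ?size_tuple //= => /eqP; exact: val_inj.
move=> [[|[|[|[|[|[|//]]]]]] Hi] [[|[|[|[|[|[|//]]]]]] Hj] /=; efact.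
Qed.

Lemma mkC7 v0 v1 v2 v3 v4 v5 v6 :
  e v0 v1 -> e v1 v2 -> e v2 v3 -> e v3 v4 -> e v4 v5 -> e v5 v6 -> e v6 v0 ->
  ~~ e v0 v2 -> ~~ e v0 v3 -> ~~ e v0 v4 -> ~~ e v0 v5 ->
  ~~ e v1 v3 -> ~~ e v1 v4 -> ~~ e v1 v5 -> ~~ e v1 v6 ->
  ~~ e v2 v4 -> ~~ e v2 v5 -> ~~ e v2 v6 ->
  ~~ e v3 v5 -> ~~ e v3 v6 -> ~~ e v4 v6 ->
  has_induced_C e 7.
Proof.
move=> h1 h2 h3 h4 h5 h6 h7 n1 n2 n3 n4 n5 n6 n7 n8 n9 n10 n11 n12 n13 n14.
have U : uniq [:: v0; v1; v2; v3; v4; v5; v6].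
  rewrite /= !inE !negb_or !andbT.
  repeat (apply/andP; split); neq_tac.
exists (fun i : 'I_7 => nth v0 [:: v0; v1; v2; v3; v4; v5; v6] i); split.
  move=> i j /eqP; rewrite nth_uniq ?size_tuple //= => /eqP; exact: val_inj.
move=> [[|[|[|[|[|[|[|//]]]]]]] Hi] [[|[|[|[|[|[|[|//]]]]]]] Hj] /=; efact.
Qed.

Lemma mkP7 v0 v1 v2 v3 v4 v5 v6 :
  e v0 v1 -> e v1 v2 -> e v2 v3 -> e v3 v4 -> e v4 v5 -> e v5 v6 ->
  ~~ e v0 v2 -> ~~ e v0 v3 -> ~~ e v0 v4 -> ~~ e v0 v5 -> ~~ e v0 v6 ->
  ~~ e v1 v3 -> ~~ e v1 v4 -> ~~ e v1 v5 -> ~~ e v1 v6 ->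
  ~~ e v2 v4 -> ~~ e v2 v5 -> ~~ e v2 v6 ->
  ~~ e v3 v5 -> ~~ e v3 v6 -> ~~ e v4 v6 ->
  has_induced_P e 7.
Proof.
move=> h1 h2 h3 h4 h5 h6 n1 n2 n3 n4 n15 n5 n6 n7 n8 n9 n10 n11 n12 n13 n14.
have U : uniq [:: v0; v1; v2; v3; v4; v5; v6].
  rewrite /= !inE !negb_or !andbT.
  repeat (apply/andP; split); neq_tac.
exists (fun i : 'I_7 => nth v0 [:: v0; v1; v2; v3; v4; v5; v6] i); split.
  move=> i j /eqP; rewrite nth_uniq ?size_tuple //= => /eqP; exact: val_inj.
move=> [[|[|[|[|[|[|[|//]]]]]]] Hi] [[|[|[|[|[|[|[|//]]]]]]] Hj] /=; efact.
Qed.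

Lemma mkP4 a b c d : e a b -> e b c -> e c d -> ~~ e a c -> ~~ e b d -> ~~ e a d ->
  induces_P e 4 [set a; b; c; d].
Proof.
move=> h1 h2 h3 n1 n2 n3.
have U : uniq [:: a; b; c; d].
  rewrite /= !inE !negb_or !andbT.
  repeat (apply/andP; split); neq_tac.
exists (fun i : 'I_4 => nth a [:: a; b; c; d] i); split; first split.
- move=> i j /eqP; rewrite nth_uniq ?size_tuple //= => /eqP; exact: val_inj.
- move=> [[|[|[|[|//]]]] Hi] [[|[|[|[|//]]]] Hj] /=; efact.
apply/setP => z; rewrite !inE; apply/imsetP/idP.
  case=> -[[|[|[|[|//]]]] Hi] _ -> /=; rewrite ?eqxx ?orbT //.
case/orP=> [/orP[/orP[]|]|] /eqP ->.
- by exists (@Ordinal 4 0 erefl).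
- by exists (@Ordinal 4 1 erefl).
- by exists (@Ordinal 4 2 erefl).
- by exists (@Ordinal 4 3 erefl).
Qed.
End G.


Section P.
Variables (T : finType) (e : rel T).

Lemma shortest (K : {set T}) x y k0 k1 : induced_connected e K ->
  k0 \in K -> e x k0 -> k1 \in K -> e y k1 ->
  [\/ exists a, [/\ a \in K, e x a & e y a],
      exists a b, [/\ a \in K /\ b \in K, e x a /\ e a b, e y b, ~~ e x b & ~~ e y a],
      exists a b c, [/\ a \in K /\ b \in K /\ c \in K, e x a /\ e a b /\ e b c /\ e y c,
                         ~~ e x b /\ ~~ e x c, ~~ e y a /\ ~~ e y b & ~~ e a c] |
      exists a b c d, [/\ a \in K /\ b \in K /\ c \in K /\ d \in K,
                         e x a /\ e a b /\ e b c /\ e c d,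
                         ~~ e x b /\ ~~ e x c /\ ~~ e x d, ~~ e a c /\ ~~ e a d & ~~ e b d]].
Proof.
move=> Kc Hk0 hx0 Hk1 hy1.
pose r := [rel u v | [&& u \in K, v \in K & e u v]].
pose good h (t : seq T) := [&& h \in K, e x h, path r h t & e y (last h t)].
pose Pb n := [exists h, exists t : n.-tuple T, good h t].
have Pbs h t : good h t -> Pb (size t).
  by move=> g; apply/existsP; exists h; apply/existsP; exists (in_tuple t).
have exP : exists n, Pb n.
  have /connectP[p pp lp] := Kc _ _ Hk0 Hk1.
  exists (size p); apply: (Pbs k0); rewrite /good Hk0 hx0 pp -lp hy1.
  by [].
case: (ex_minnP exP) => m /existsP[h /existsP[t g]] minm.
have sz : size t = m by rewrite size_tuple.
have small h' t' : good h' t' -> size t' < m -> False.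
  by move=> g' lt; move: (minm _ (Pbs _ _ g')); rewrite leqNgt lt.
move: g sz small; case: t => /= s _.
move=> /and4P[hK hxh pth hyl] sz small.
case: s pth hyl sz => [|k2 [|k3 [|k4 rest]]] /=.
- by move=> _ hy _; constructor 1; exists h.
- rewrite andbT; move=> /andP[_ /andP[k2K hk2]] hy sz.
  constructor 2; exists h, k2; split => //.
  + apply/negP => hx2; apply: (small k2 [::]); last by rewrite -sz.
    by rewrite /good /= k2K hx2 hy.
  + apply/negP => hyh; apply: (small h [::]); last by rewrite -sz.
    by rewrite /good /= hK hxh hyh.
- rewrite andbT => /andP[/and3P[_ k2K hk2] /and3P[_ k3K hk3]] hy sz.
  constructor 3; exists h, k2, k3; split => //.
  + split; apply/negP => hx'.
    * apply: (small k2 [:: k3]); last by rewrite -sz.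
      by rewrite /good /= k2K hx' k3K hk3 hy.
    * apply: (small k3 [::]); last by rewrite -sz.
      by rewrite /good /= k3K hx' hy.
  + split; apply/negP => hy'.
    * apply: (small h [::]); last by rewrite -sz.
      by rewrite /good /= hK hxh hy'.
    * apply: (small h [:: k2]); last by rewrite -sz.
      by rewrite /good /= hK hxh k2K hk2 hy'.
  + apply/negP => h13; apply: (small h [:: k3]); last by rewrite -sz.
    by rewrite /good /= hK hxh k3K h13 hy.
- move=> /and4P[/and3P[_ k2K hk2] /and3P[_ k3K hk3] /and3P[_ k4K hk4] prest] hy sz.
  constructor 4; exists h, k2, k3, k4; split => //.
  + split; [|split]; apply/negP => hx'.
    * apply: (small k2 [:: k3, k4 & rest]); last by rewrite -sz.
      by rewrite /good /= k2K hx' k3K hk3 k4K hk4 prest hy.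
    * apply: (small k3 [:: k4 & rest]); last by rewrite -sz ltnS leqW.
      by rewrite /good /= k3K hx' k4K hk4 prest hy.
    * apply: (small k4 rest); last by rewrite -sz ltnS leqW // leqW.
      by rewrite /good /= k4K hx' prest hy.
  + split; apply/negP => h'.
    * apply: (small h [:: k3, k4 & rest]); last by rewrite -sz.
      by rewrite /good /= hK hxh k3K h' k4K hk4 prest hy.
    * apply: (small h [:: k4 & rest]); last by rewrite -sz ltnS leqW.
      by rewrite /good /= hK hxh k4K h' prest hy.
  + apply/negP => h'; apply: (small h [:: k2, k4 & rest]); last by rewrite -sz.
    by rewrite /good /= hK hxh k2K hk2 k4K h' prest hy.
Qed.
End P.


Section Blow.
Variables (T : finType) (e : rel T) (B : 'I_5 -> {set T}).
Hypothesis esym : symmetric e.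
Hypothesis eirr : irreflexive e.
Hypothesis nB : nice_blowup e B.
Hypothesis nC4 : ~ has_induced_C e 4.
Hypothesis nC6 : ~ has_induced_C e 6.
Hypothesis nC7 : ~ has_induced_C e 7.
Hypothesis nP7 : ~ has_induced_P e 7.

Ltac fa := first [ assumption | (rewrite esym; assumption) ].

Lemma clq j u v : u \in B j -> v \in B j -> u != v -> e u v.
Proof. by case: nB => _ Hc _ _ _ Hu Hv; exact: (Hc j u v Hu Hv). Qed.
Lemma anti j k u v : ordS (ordS j) = k -> u \in B j -> v \in B k -> ~~ e u v.
Proof. by case: nB => _ _ _ Ha _ <- Hu Hv; exact: (Ha j u v Hu Hv). Qed.
Lemma nbrR j k u : ordS j = k -> u \in B j -> exists2 w, w \in B k & e u w.
Proof. by case: nB => _ _ Hn _ _ <- Hu; case: (Hn _ _ Hu). Qed.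
Lemma nbrL j k u : ordS k = j -> u \in B j -> exists2 w, w \in B k & e u w.
Proof. by case: nB => _ _ Hn _ _ <- Hu; case: (Hn _ _ Hu); rewrite ordSK. Qed.
Lemma bag_ne j k u v : j != k -> u \in B j -> v \in B k -> u != v.
Proof.
case: nB => Hd _ _ _ _ jk Hu Hv; apply/eqP => E; subst v.
by rewrite (disjointFr (Hd _ _ jk) Hu) in Hv.
Qed.
Lemma out_ne j u v : u \notin blowup_vertices B -> v \in B j -> u != v.
Proof.
move=> Hu Hv; apply/eqP => E; subst v; move/negP: Hu; apply.
by apply/bigcupP; exists j.
Qed.
Lemma out_ne' j u v : u \notin blowup_vertices B -> v \in B j -> v != u.
Proof. by move=> Hu Hv; rewrite eq_sym; apply: out_ne Hv. Qed.

Lemma C4c a b c d : a != c -> b != d ->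
  e a b -> e b c -> e c d -> e d a -> ~~ e a c -> ~~ e b d -> False.
Proof. by move=> *; apply: nC4; apply: (mkC4 esym eirr (a:=a) (b:=b) (c:=c) (d:=d)). Qed.
Lemma C6c v0 v1 v2 v3 v4 v5 :
  e v0 v1 -> e v1 v2 -> e v2 v3 -> e v3 v4 -> e v4 v5 -> e v5 v0 ->
  ~~ e v0 v2 -> ~~ e v0 v3 -> ~~ e v0 v4 -> ~~ e v1 v3 -> ~~ e v1 v4 -> ~~ e v1 v5 ->
  ~~ e v2 v4 -> ~~ e v2 v5 -> ~~ e v3 v5 -> False.
Proof. by move=> *; apply: nC6; apply: (mkC6 esym eirr (v0:=v0) (v1:=v1) (v2:=v2) (v3:=v3) (v4:=v4) (v5:=v5)). Qed.
Lemma C7c v0 v1 v2 v3 v4 v5 v6 :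
  e v0 v1 -> e v1 v2 -> e v2 v3 -> e v3 v4 -> e v4 v5 -> e v5 v6 -> e v6 v0 ->
  ~~ e v0 v2 -> ~~ e v0 v3 -> ~~ e v0 v4 -> ~~ e v0 v5 ->
  ~~ e v1 v3 -> ~~ e v1 v4 -> ~~ e v1 v5 -> ~~ e v1 v6 ->
  ~~ e v2 v4 -> ~~ e v2 v5 -> ~~ e v2 v6 ->
  ~~ e v3 v5 -> ~~ e v3 v6 -> ~~ e v4 v6 -> False.
Proof. by move=> *; apply: nC7; apply: (mkC7 esym eirr (v0:=v0) (v1:=v1) (v2:=v2) (v3:=v3) (v4:=v4) (v5:=v5) (v6:=v6)). Qed.
Lemma P7c v0 v1 v2 v3 v4 v5 v6 :
  e v0 v1 -> e v1 v2 -> e v2 v3 -> e v3 v4 -> e v4 v5 -> e v5 v6 ->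
  ~~ e v0 v2 -> ~~ e v0 v3 -> ~~ e v0 v4 -> ~~ e v0 v5 -> ~~ e v0 v6 ->
  ~~ e v1 v3 -> ~~ e v1 v4 -> ~~ e v1 v5 -> ~~ e v1 v6 ->
  ~~ e v2 v4 -> ~~ e v2 v5 -> ~~ e v2 v6 ->
  ~~ e v3 v5 -> ~~ e v3 v6 -> ~~ e v4 v6 -> False.
Proof. by move=> *; apply: nP7; apply: (mkP7 esym eirr (v0:=v0) (v1:=v1) (v2:=v2) (v3:=v3) (v4:=v4) (v5:=v5) (v6:=v6)). Qed.

Lemma P4c j1 j2 j3 a b c d : ordS j1 = j2 -> ordS j2 = j3 ->
  a \in B j1 -> b \in B j2 -> c \in B j2 -> d \in B j3 ->
  e a b -> ~~ e a c -> ~~ e b d -> e c d -> False.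
Proof.
move=> E12 E23 Ha Hb Hc Hd h1 n1 n2 h3.
have bc : b != c := ne_by h1 n1.
have h2 : e b c := clq Hb Hc bc.
have n3 : ~~ e a d by apply: (anti _ Ha Hd); rewrite E12.
case: nB => _ _ _ _ Hp; subst j2 j3.
exact: (Hp _ _ _ _ _ Ha Hb Hc bc Hd (mkP4 esym eirr h1 h2 h3 n1 n2 n3)).
Qed.

Definition avoid v j := forall w, w \in B j -> ~~ e v w.

Lemma S5c j1 j2 j3 v0 v1 v2 v3 v4 : ordS j1 = j2 -> ordS j2 = j3 ->
  v0 \in B j1 -> v4 \in B j3 -> avoid v1 j2 -> avoid v2 j2 -> avoid v3 j2 ->
  e v0 v1 -> e v1 v2 -> e v2 v3 -> e v3 v4 ->
  ~~ e v0 v2 -> ~~ e v0 v3 -> ~~ e v1 v3 -> ~~ e v1 v4 -> ~~ e v2 v4 -> False.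
Proof.
move=> E12 E23 H0 H4 A1 A2 A3 h1 h2 h3 h4 n1 n2 n3 n4 n5.
have n0 : ~~ e v0 v4 by apply: (anti _ H0 H4); rewrite E12.
have [w Hw hw] := nbrL E23 H4.
have [w' Hw' hw'] := nbrR E12 H0.
have := A1 _ Hw; have := A2 _ Hw; have := A3 _ Hw.
have := A1 _ Hw'; have := A2 _ Hw'; have := A3 _ Hw'.
move=> m1 m2 m3 m4 m5 m6.
case: (boolP (e v0 w)) => g1.
  by apply: (C6c (v0:=v0) (v1:=v1) (v2:=v2) (v3:=v3) (v4:=v4) (v5:=w)); fa.
case: (boolP (e v4 w')) => g2.
  by apply: (C6c (v0:=v0) (v1:=v1) (v2:=v2) (v3:=v3) (v4:=v4) (v5:=w')); fa.
have g3 : e w w' := clq Hw Hw' (ne_by hw g2).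
by apply: (C7c (v0:=v0) (v1:=v1) (v2:=v2) (v3:=v3) (v4:=v4) (v5:=w) (v6:=w')); fa.
Qed.

Lemma S6c j1 j2 j3 v0 v1 v2 v3 v4 v5 : ordS j1 = j2 -> ordS j2 = j3 ->
  v0 \in B j1 -> v5 \in B j3 -> avoid v1 j2 -> avoid v2 j2 -> avoid v3 j2 -> avoid v4 j2 ->
  e v0 v1 -> e v1 v2 -> e v2 v3 -> e v3 v4 -> e v4 v5 ->
  ~~ e v0 v2 -> ~~ e v0 v3 -> ~~ e v0 v4 -> ~~ e v1 v3 -> ~~ e v1 v4 -> ~~ e v1 v5 ->
  ~~ e v2 v4 -> ~~ e v2 v5 -> ~~ e v3 v5 -> False.
Proof.
move=> E12 E23 H0 H5 A1 A2 A3 A4 h1 h2 h3 h4 h5 n1 n2 n3 n4 n5 n6 n7 n8 n9.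
have n0 : ~~ e v0 v5 by apply: (anti _ H0 H5); rewrite E12.
have [w Hw hw] := nbrL E23 H5.
have := A1 _ Hw; have := A2 _ Hw; have := A3 _ Hw; have := A4 _ Hw.
move=> m1 m2 m3 m4.
case: (boolP (e v0 w)) => g1.
  by apply: (C7c (v0:=v0) (v1:=v1) (v2:=v2) (v3:=v3) (v4:=v4) (v5:=v5) (v6:=w)); fa.
by apply: (P7c (v0:=v0) (v1:=v1) (v2:=v2) (v3:=v3) (v4:=v4) (v5:=v5) (v6:=w)); fa.
Qed.

Lemma L4c j1 j2 j3 j4 v0 v1 v2 v3 : ordS j1 = j2 -> ordS j2 = j3 -> ordS j3 = j4 ->
  v0 \in B j1 -> v3 \in B j4 -> avoid v1 j2 -> avoid v2 j2 -> avoid v1 j3 -> avoid v2 j3 ->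
  e v0 v1 -> e v1 v2 -> e v2 v3 -> ~~ e v0 v2 -> ~~ e v1 v3 -> False.
Proof.
move=> E12 E23 E34 H0 H3 A1 A2 A1' A2' h1 h2 h3 n1 n2.
have n0 : ~~ e v3 v0 by apply: (anti _ H3 H0); rewrite -E34 -E23 -E12 ordS5.
have [a Ha ha] := nbrR E12 H0.
have [d Hd hd] := nbrL E34 H3.
have na : ~~ e a v3 by apply: (anti _ Ha H3); rewrite E23.
have nd : ~~ e v0 d by apply: (anti _ H0 Hd); rewrite E12.
have := A1 _ Ha; have := A2 _ Ha; have := A1' _ Hd; have := A2' _ Hd.
move=> m1 m2 m3 m4.
case: (boolP (e a d)) => g1.
  by apply: (C6c (v0:=v0) (v1:=v1) (v2:=v2) (v3:=v3) (v4:=d) (v5:=a)); fa.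
have [f Hf hf] := nbrR E23 Ha.
have g2 : e f d := clq Hf Hd (ne_by hf g1).
have nf : ~~ e v0 f by apply: (anti _ H0 Hf); rewrite E12.
have := A1' _ Hf; have := A2' _ Hf => m5 m6.
case: (boolP (e f v3)) => g3.
  by apply: (C6c (v0:=v0) (v1:=v1) (v2:=v2) (v3:=v3) (v4:=f) (v5:=a)); fa.
by apply: (C7c (v0:=v0) (v1:=v1) (v2:=v2) (v3:=v3) (v4:=d) (v5:=f) (v6:=a)); fa.
Qed.

Lemma L5c j1 j2 j3 j4 v0 v1 v2 v3 v4 : ordS j1 = j2 -> ordS j2 = j3 -> ordS j3 = j4 ->
  v0 \in B j1 -> v4 \in B j4 -> avoid v1 j2 -> avoid v2 j2 -> avoid v3 j2 ->
  avoid v1 j3 -> avoid v2 j3 -> avoid v3 j3 ->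
  e v0 v1 -> e v1 v2 -> e v2 v3 -> e v3 v4 ->
  ~~ e v0 v2 -> ~~ e v0 v3 -> ~~ e v1 v3 -> ~~ e v1 v4 -> ~~ e v2 v4 -> False.
Proof.
move=> E12 E23 E34 H0 H4 A1 A2 A3 A1' A2' A3' h1 h2 h3 h4 n1 n2 n3 n4 n5.
have n0 : ~~ e v4 v0 by apply: (anti _ H4 H0); rewrite -E34 -E23 -E12 ordS5.
have [a Ha ha] := nbrR E12 H0.
have [d Hd hd] := nbrL E34 H4.
have na : ~~ e a v4 by apply: (anti _ Ha H4); rewrite E23.
have nd : ~~ e v0 d by apply: (anti _ H0 Hd); rewrite E12.
have := A1 _ Ha; have := A2 _ Ha; have := A3 _ Ha.
have := A1' _ Hd; have := A2' _ Hd; have := A3' _ Hd.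
move=> m1 m2 m3 m4 m5 m6.
case: (boolP (e a d)) => g1.
  by apply: (C7c (v0:=v0) (v1:=v1) (v2:=v2) (v3:=v3) (v4:=v4) (v5:=d) (v6:=a)); fa.
have [f Hf hf] := nbrR E23 Ha.
have g2 : e f d := clq Hf Hd (ne_by hf g1).
have nf : ~~ e v0 f by apply: (anti _ H0 Hf); rewrite E12.
have := A1' _ Hf; have := A2' _ Hf; have := A3' _ Hf => m7 m8 m9.
case: (boolP (e f v4)) => g3.
  by apply: (C7c (v0:=v0) (v1:=v1) (v2:=v2) (v3:=v3) (v4:=v4) (v5:=f) (v6:=a)); fa.
by apply: (P7c (v0:=v0) (v1:=v1) (v2:=v2) (v3:=v3) (v4:=v4) (v5:=d) (v6:=f)); fa.
Qed.

Lemma L6c j1 j2 j3 j4 v0 v1 v2 v3 v4 v5 : ordS j1 = j2 -> ordS j2 = j3 -> ordS j3 = j4 ->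
  v0 \in B j1 -> v5 \in B j4 -> avoid v1 j3 -> avoid v2 j3 -> avoid v3 j3 -> avoid v4 j3 ->
  e v0 v1 -> e v1 v2 -> e v2 v3 -> e v3 v4 -> e v4 v5 ->
  ~~ e v0 v2 -> ~~ e v0 v3 -> ~~ e v0 v4 -> ~~ e v1 v3 -> ~~ e v1 v4 -> ~~ e v1 v5 ->
  ~~ e v2 v4 -> ~~ e v2 v5 -> ~~ e v3 v5 -> False.
Proof.
move=> E12 E23 E34 H0 H5 A1 A2 A3 A4 h1 h2 h3 h4 h5 n1 n2 n3 n4 n5 n6 n7 n8 n9.
have n0 : ~~ e v5 v0 by apply: (anti _ H5 H0); rewrite -E34 -E23 -E12 ordS5.
have [d Hd hd] := nbrL E34 H5.
have nd : ~~ e v0 d by apply: (anti _ H0 Hd); rewrite E12.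
have := A1 _ Hd; have := A2 _ Hd; have := A3 _ Hd; have := A4 _ Hd.
move=> m1 m2 m3 m4.
by apply: (P7c (v0:=v0) (v1:=v1) (v2:=v2) (v3:=v3) (v4:=v4) (v5:=v5) (v6:=d)); fa.
Qed.

Lemma P4shape a b c d : induces_P e 4 [set a; b; c; d] ->
  a != b -> a != c -> a != d -> b != c -> b != d -> c != d ->
  e b c -> ~~ e a d ->
  (e a b && ~~ e a c && ~~ e b d && e c d) || (~~ e a b && e a c && e b d && ~~ e c d).
Proof.
move=> [f [[finj fadj] fim]] ab ac ad bc bd cd.
have: a \in [set f x | x : 'I_4] by rewrite fim !inE eqxx.
case/imsetP => p _ Ea.
have: b \in [set f x | x : 'I_4] by rewrite fim !inE eqxx ?orbT.
case/imsetP => q _ Eb.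
have: c \in [set f x | x : 'I_4] by rewrite fim !inE eqxx ?orbT.
case/imsetP => r _ Ec.
have: d \in [set f x | x : 'I_4] by rewrite fim !inE eqxx ?orbT.
case/imsetP => s _ Ed.
subst a b c d; rewrite !fadj.
have pq : p != q by apply: contraNneq ab => ->.
have pr : p != r by apply: contraNneq ac => ->.
have ps : p != s by apply: contraNneq ad => ->.
have qr : q != r by apply: contraNneq bc => ->.
have qs : q != s by apply: contraNneq bd => ->.
have rs : r != s by apply: contraNneq cd => ->.
move: pq pr ps qr qs rs; clear ab ac ad bc bd cd fim.
by case: p => [[|[|[|[|//]]]] ?]; case: q => [[|[|[|[|//]]]] ?];
   case: r => [[|[|[|[|//]]]] ?]; case: s => [[|[|[|[|//]]]] ?].
Qed.

Lemma supp_w v j : j \in supp e B v -> exists2 w, w \in B j & e v w.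
Proof. by rewrite inE => /existsP[w /andP[Hw h]]; exists w. Qed.
Lemma supp_n v j : j \notin supp e B v -> forall w, w \in B j -> ~~ e v w.
Proof. move=> Hj w Hw; apply/negP => h; move/negP: Hj; apply; rewrite inE; apply/existsP; exists w; by rewrite Hw. Qed.

Lemma pred4 (j : 'I_5) : ord_pred j = ordS (ordS (ordS (ordS j))).
Proof. by rewrite -{1}(ordS5 j) ordSK. Qed.
Lemma neA3 (j : 'I_5) :
  (ordS (ordS j) \notin [set ordS (ordS (ordS (ordS j))); j; ordS j]) &&
  (ordS (ordS (ordS j)) \notin [set ordS (ordS (ordS (ordS j))); j; ordS j]).
Proof. by rewrite !inE; case: j => [[|[|[|[|[|]]]]] ?]. Qed.
Lemma neA2 (j : 'I_5) :
  [&& (ordS (ordS j) \notin [set j; ordS j]),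
      (ordS (ordS (ordS j)) \notin [set j; ordS j]) &
      (ordS (ordS (ordS (ordS j))) \notin [set j; ordS j])].
Proof. by rewrite !inE; case: j => [[|[|[|[|[|]]]]] ?]. Qed.

Lemma A3g j x : x \in A3 e B j -> [/\ x \notin blowup_vertices B,
  (exists2 w, w \in B (ordS (ordS (ordS (ordS j)))) & e x w), (exists2 w, w \in B j & e x w),
  (exists2 w, w \in B (ordS j) & e x w) &
  ((forall w, w \in B (ordS (ordS j)) -> ~~ e x w) /\ (forall w, w \in B (ordS (ordS (ordS j))) -> ~~ e x w))].
Proof.
rewrite inE => /andP[nb /eqP Hs]; rewrite pred4 in Hs.
have /andP[n2 n3] := neA3 j.
split => //; try split; try apply: supp_w; try apply: supp_n; rewrite ?Hs ?n2 ?n3 //;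
  by rewrite !inE eqxx ?orbT.
Qed.
Lemma A2g j x : x \in A2 e B j -> [/\ x \notin blowup_vertices B,
  (exists2 w, w \in B j & e x w), (exists2 w, w \in B (ordS j) & e x w),
  (forall w, w \in B (ordS (ordS j)) -> ~~ e x w) &
  ((forall w, w \in B (ordS (ordS (ordS j))) -> ~~ e x w) /\ (forall w, w \in B (ordS (ordS (ordS (ordS j)))) -> ~~ e x w))].
Proof.
rewrite inE => /andP[nb /eqP Hs].
have /and3P[n2 n3 n4] := neA2 j.
split => //; try split; try apply: supp_w; try apply: supp_n; rewrite ?Hs ?n2 ?n3 ?n4 //;
  by rewrite !inE eqxx ?orbT.
Qed.

Definition addB j x := fun k => if k == j then x |: B k else B k.

Lemma inB j x k v : v \in B k -> v \in addB j x k.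
Proof. by move=> Hv; rewrite /addB; case: ifP => _ //; rewrite in_setU1 Hv orbT. Qed.
Lemma memB j x k v : v \in addB j x k -> (v = x /\ k = j) \/ v \in B k.
Proof.
rewrite /addB; case: (eqVneq k j) => [->|_]; last by right.
by rewrite in_setU1 => /orP[/eqP->|]; [left|right].
Qed.

Lemma disjW (X Y : {set T}) : (forall v, v \in X -> v \in Y -> False) -> [disjoint X & Y].
Proof.
move=> H; rewrite disjoints_subset; apply/subsetP => v Hv; rewrite inE.
by apply/negP => Hv'; exact: (H v).
Qed.

Lemma ordSSinj (k j : 'I_5) : ordS (ordS k) = j -> k = ordS (ordS (ordS j)).
Proof. by move=> <-; rewrite ordS5. Qed.
Lemma ordSinj' (k j : 'I_5) : ordS k = j -> k = ordS (ordS (ordS (ordS j))).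
Proof. by move=> <-; rewrite ordS5. Qed.
Lemma ordS_ne (j : 'I_5) : [/\ ordS j != j, ordS (ordS j) != j, ordS (ordS (ordS j)) != j &
  ordS (ordS (ordS (ordS j))) != j].
Proof. by case: j => [[|[|[|[|[|]]]]] ?]. Qed.
Lemma neS (k : 'I_5) : k != ordS k.
Proof. by case: k => [[|[|[|[|[|]]]]] ?]. Qed.
Lemma neSS (k : 'I_5) : k != ordS (ordS k).
Proof. by case: k => [[|[|[|[|[|]]]]] ?]. Qed.
Lemma neSSS (k : 'I_5) : k != ordS (ordS (ordS k)).
Proof. by case: k => [[|[|[|[|[|]]]]] ?]. Qed.

Lemma memB' j x k v : v \in addB j x k -> v != x -> v \in B k.
Proof. by case/memB => [[-> _]|//]; rewrite eqxx. Qed.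
Lemma memBx j x k : x \notin blowup_vertices B -> x \in addB j x k -> k = j.
Proof.
move=> nb /memB[[_ ->]//|Hx]; move/negP: nb => []; by apply/bigcupP; exists k.
Qed.

Lemma addable j x : x \in A3 e B j -> (forall w, w \in B j -> e x w) ->
  nice_blowup e (addB j x).
Proof.
move=> Ax Cx.
have [nb [a5 Ha5 fxa5] _ [a2 Ha2 fxa2] [n2 n3]] := A3g Ax.
have [ne1 ne2 ne3 ne4] := ordS_ne j.
have xB k v : v \in B k -> x != v by move=> Hv; exact: out_ne nb Hv.
have xB' k v : v \in B k -> v != x by move=> Hv; rewrite eq_sym; exact: out_ne nb Hv.
case: (nB) => Hd Hc Hn Ha Hp.
split.
- move=> k k' kk'; apply: disjW => v /memB[[Ev Ek]|Hv] /memB[[Ev' Ek']|Hv'].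
  + by subst; rewrite eqxx in kk'.
  + by subst v; move: (xB _ _ Hv'); rewrite eqxx.
  + by subst v; move: (xB _ _ Hv); rewrite eqxx.
  + by rewrite (disjointFr (Hd _ _ kk') Hv) in Hv'.
- move=> k u v /memB[[Eu Ek]|Hu] /memB[[Ev Ek']|Hv] uv.
  + by subst; rewrite eqxx in uv.
  + by subst u k; apply: Cx.
  + by subst v k; rewrite esym; apply: Cx.
  + exact: (Hc k u v Hu Hv uv).
- move=> k v /memB[[Ev Ek]|Hv].
    subst v k; split; [exists a5; [rewrite pred4; exact: inB|done] | exists a2 => //; exact: inB].
  have [[w Hw h] [w' Hw' h']] := Hn _ _ Hv.
  by split; [exists w => //; exact: inB | exists w' => //; exact: inB].
- move=> k u v /memB[[Eu Ek]|Hu] /memB[[Ev Ek']|Hv].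
  + by subst; rewrite Ek' eqxx in ne2.
  + by subst u k; exact: n2.
  + subst v; have Ek2 := ordSSinj Ek'; subst k.
    by rewrite esym; apply: n3.
  + exact: (Ha k u v Hu Hv).
move=> k a b c d Ha' Hb Hc' bc Hd' HP.
case: (eqVneq a x) => [Ea|nax].
  subst a; have Ek := memBx nb Ha'; subst k.
  have nbx : b != x by apply/eqP => Eb; subst b; move: (memBx nb Hb) => E; rewrite E eqxx in ne1.
  have ncx : c != x by apply/eqP => Eb; subst c; move: (memBx nb Hc') => E; rewrite E eqxx in ne1.
  have ndx : d != x by apply/eqP => Eb; subst d; move: (memBx nb Hd') => E; rewrite E eqxx in ne2.
  have Hb1 := memB' Hb nbx; have Hc1 := memB' Hc' ncx; have Hd1 := memB' Hd' ndx.
  have fbc := clq Hb1 Hc1 bc.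
  have nxd := n2 _ Hd1.
  have bd := bag_ne (neS _) Hb1 Hd1; have cd := bag_ne (neS _) Hc1 Hd1.
  have nba5 : ~~ e a5 b by apply: (anti _ Ha5 Hb1); rewrite ordS5.
  have nca5 : ~~ e a5 c by apply: (anti _ Ha5 Hc1); rewrite ordS5.
  have Ac : avoid c (ordS (ordS (ordS j))) := fun w Hw => anti erefl Hc1 Hw.
  have Ab : avoid b (ordS (ordS (ordS j))) := fun w Hw => anti erefl Hb1 Hw.
  case/orP: (P4shape HP (xB _ _ Hb1) (xB _ _ Hc1) (xB _ _ Hd1) bc bd cd fbc nxd)
    => /andP[/andP[/andP[h1 h2] h3] h4].
  + by apply: (S5c (v0:=d) (v1:=c) (v2:=b) (v3:=x) (v4:=a5) erefl erefl Hd1 Ha5 Ac Ab n3); fa.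
  + by apply: (S5c (v0:=d) (v1:=b) (v2:=c) (v3:=x) (v4:=a5) erefl erefl Hd1 Ha5 Ab Ac n3); fa.
case: (eqVneq d x) => [Ed|ndx].
  subst d; have Ek := ordSSinj (memBx nb Hd'); subst k.
  have nbx : b != x by apply/eqP => Eb; subst b; move: (memBx nb Hb) => E; rewrite E eqxx in ne4.
  have ncx : c != x by apply/eqP => Eb; subst c; move: (memBx nb Hc') => E; rewrite E eqxx in ne4.
  have Ha1 := memB' Ha' nax; have Hb1 := memB' Hb nbx; have Hc1 := memB' Hc' ncx.
  have fbc := clq Hb1 Hc1 bc.
  have nax' : ~~ e a x by rewrite esym; apply: n3.
  have ab := bag_ne (neS _) Ha1 Hb1; have ac := bag_ne (neS _) Ha1 Hc1.
  have na2b : ~~ e b a2 by apply: (anti _ Hb1 Ha2); rewrite ordS5.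
  have na2c : ~~ e c a2 by apply: (anti _ Hc1 Ha2); rewrite ordS5.
  have Ac : avoid c (ordS (ordS j)) := fun w Hw => sN esym (anti erefl Hw Hc1).
  have Ab : avoid b (ordS (ordS j)) := fun w Hw => sN esym (anti erefl Hw Hb1).
  case/orP: (P4shape HP ab ac (xB' _ _ Ha1) bc (xB' _ _ Hb1) (xB' _ _ Hc1) fbc nax')
    => /andP[/andP[/andP[h1 h2] h3] h4].
  + by apply: (S5c (v0:=a2) (v1:=x) (v2:=c) (v3:=b) (v4:=a) erefl erefl Ha2 Ha1 n2 Ac Ab); fa.
  + by apply: (S5c (v0:=a2) (v1:=x) (v2:=b) (v3:=c) (v4:=a) erefl erefl Ha2 Ha1 n2 Ab Ac); fa.
have Ha1 := memB' Ha' nax; have Hd1 := memB' Hd' ndx.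
case: (eqVneq b x) => [Eb|nbx].
  subst b; have Ek := ordSinj' (memBx nb Hb); subst k.
  have ncx : c != x by rewrite eq_sym.
  have Hc1 := memB' Hc' ncx; rewrite ordS5 in Hc1; rewrite ordS5 in Hd1.
  have fxc := Cx _ Hc1.
  have nad : ~~ e a d by apply: (anti _ Ha1 Hd1); rewrite ordS5.
  have ac := bag_ne ne4 Ha1 Hc1.
  have ad : a != d by apply: (bag_ne _ Ha1 Hd1); rewrite eq_sym; exact: neSSS.
  have cd := bag_ne (neS j) Hc1 Hd1.
  have Ac2 : avoid c (ordS (ordS j)) := fun w Hw => anti erefl Hc1 Hw.
  have Ac3 : avoid c (ordS (ordS (ordS j))).
    by move=> w Hw; rewrite esym; apply: (anti _ Hw Hc1); rewrite ordS5.
  case/orP: (P4shape HP nax ac ad bc (xB _ _ Hd1) cd fxc nad)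
    => /andP[/andP[/andP[h1 h2] h3] h4].
  + by apply: (L4c (v0:=d) (v1:=c) (v2:=x) (v3:=a) erefl erefl erefl Hd1 Ha1 Ac2 n2 Ac3 n3); fa.
  + by apply: (L4c (v0:=d) (v1:=x) (v2:=c) (v3:=a) erefl erefl erefl Hd1 Ha1 n2 Ac2 n3 Ac3); fa.
case: (eqVneq c x) => [Ec|ncx].
  subst c; have Ek := ordSinj' (memBx nb Hc'); subst k.
  have Hb1 := memB' Hb nbx; rewrite ordS5 in Hb1; rewrite ordS5 in Hd1.
  have fbx : e b x by rewrite esym; exact: Cx.
  have nad : ~~ e a d by apply: (anti _ Ha1 Hd1); rewrite ordS5.
  have ab := bag_ne ne4 Ha1 Hb1.
  have ad : a != d by apply: (bag_ne _ Ha1 Hd1); rewrite eq_sym; exact: neSSS.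
  have bd := bag_ne (neS j) Hb1 Hd1.
  have Ab2 : avoid b (ordS (ordS j)) := fun w Hw => anti erefl Hb1 Hw.
  have Ab3 : avoid b (ordS (ordS (ordS j))).
    by move=> w Hw; rewrite esym; apply: (anti _ Hw Hb1); rewrite ordS5.
  case/orP: (P4shape HP ab nax ad bc bd (xB _ _ Hd1) fbx nad)
    => /andP[/andP[/andP[h1 h2] h3] h4].
  + by apply: (L4c (v0:=d) (v1:=x) (v2:=b) (v3:=a) erefl erefl erefl Hd1 Ha1 n2 Ab2 n3 Ab3); fa.
  + by apply: (L4c (v0:=d) (v1:=b) (v2:=x) (v3:=a) erefl erefl erefl Hd1 Ha1 Ab2 n2 Ab3 n3); fa.
exact: (Hp k a b c d Ha1 (memB' Hb nbx) (memB' Hc' ncx) bc Hd1 HP).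
Qed.

Lemma addable_proper j x : x \notin blowup_vertices B ->
  blowup_vertices B \proper blowup_vertices (addB j x).
Proof.
move=> nb; rewrite properE; apply/andP; split.
  apply/subsetP => v /bigcupP[k _ Hv]; apply/bigcupP; exists k => //; exact: inB.
apply/negP => /subsetP H; move/negP: nb; apply; apply: H.
by apply/bigcupP; exists j => //; rewrite /addB eqxx in_setU1 eqxx.
Qed.

Section Idx2.
Variable i : 'I_5.
Hypothesis maxB : maximal_nice_blowup e B.
Local Notation I0 := i.
Local Notation I1 := (ordS i).
Local Notation I2 := (ordS (ordS i)).
Local Notation I3 := (ordS (ordS (ordS i))).
Local Notation I4 := (ordS (ordS (ordS (ordS i)))).
Lemma S0 : ordS I0 = I1. Proof. by []. Qed.
Lemma S1 : ordS I1 = I2. Proof. by []. Qed.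
Lemma S2 : ordS I2 = I3. Proof. by []. Qed.
Lemma S3 : ordS I3 = I4. Proof. by []. Qed.
Lemma S4 : ordS I4 = I0. Proof. exact: ordS5. Qed.
Lemma SS0 : ordS (ordS I0) = I2. Proof. by []. Qed.
Lemma SS1 : ordS (ordS I1) = I3. Proof. by []. Qed.
Lemma SS2 : ordS (ordS I2) = I4. Proof. by []. Qed.
Lemma SS3 : ordS (ordS I3) = I0. Proof. exact: ordS5. Qed.
Lemma SS4 : ordS (ordS I4) = I1. Proof. by rewrite ordS5. Qed.
Ltac ci := by case: i => [[|[|[|[|[|]]]]] ?].
Lemma NE01 : I0 != I1. Proof. ci. Qed.
Lemma NE02 : I0 != I2. Proof. ci. Qed.
Lemma NE03 : I0 != I3. Proof. ci. Qed.
Lemma NE04 : I0 != I4. Proof. ci. Qed.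
Lemma NE10 : I1 != I0. Proof. ci. Qed.
Lemma NE12 : I1 != I2. Proof. ci. Qed.
Lemma NE13 : I1 != I3. Proof. ci. Qed.
Lemma NE14 : I1 != I4. Proof. ci. Qed.
Lemma NE20 : I2 != I0. Proof. ci. Qed.
Lemma NE21 : I2 != I1. Proof. ci. Qed.
Lemma NE23 : I2 != I3. Proof. ci. Qed.
Lemma NE24 : I2 != I4. Proof. ci. Qed.
Lemma NE30 : I3 != I0. Proof. ci. Qed.
Lemma NE31 : I3 != I1. Proof. ci. Qed.
Lemma NE32 : I3 != I2. Proof. ci. Qed.
Lemma NE34 : I3 != I4. Proof. ci. Qed.
Lemma NE40 : I4 != I0. Proof. ci. Qed.
Lemma NE41 : I4 != I1. Proof. ci. Qed.
Lemma NE42 : I4 != I2. Proof. ci. Qed.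
Lemma NE43 : I4 != I3. Proof. ci. Qed.
Lemma predI0 : ord_pred I0 = I4. Proof. by rewrite -{1}(ordS5 i) ordSK. Qed.

Lemma A3_0 x : x \in A3 e B I0 -> [/\ x \notin blowup_vertices B,
  (exists2 w, w \in B I4 & e x w), (exists2 w, w \in B I0 & e x w),
  (exists2 w, w \in B I1 & e x w) &
  ((forall w, w \in B I2 -> ~~ e x w) /\ (forall w, w \in B I3 -> ~~ e x w))].
Proof. exact: A3g. Qed.
Lemma A3_1 x : x \in A3 e B I1 -> [/\ x \notin blowup_vertices B,
  (exists2 w, w \in B I0 & e x w), (exists2 w, w \in B I1 & e x w),
  (exists2 w, w \in B I2 & e x w) &
  ((forall w, w \in B I3 -> ~~ e x w) /\ (forall w, w \in B I4 -> ~~ e x w))].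
Proof. by move/A3g; rewrite ordS5. Qed.
Lemma A2_0 x : x \in A2 e B I0 -> [/\ x \notin blowup_vertices B,
  (exists2 w, w \in B I0 & e x w), (exists2 w, w \in B I1 & e x w),
  (forall w, w \in B I2 -> ~~ e x w) &
  ((forall w, w \in B I3 -> ~~ e x w) /\ (forall w, w \in B I4 -> ~~ e x w))].
Proof. exact: A2g. Qed.

Ltac econtra2 :=
  match goal with
  | H : is_true (e ?a ?a) |- _ => by rewrite eirr in H
  | H1 : is_true (e ?a ?b), H2 : is_true (~~ e ?a ?b) |- _ => by rewrite H1 in H2
  | H1 : is_true (e ?a ?b), H2 : is_true (~~ e ?b ?a) |- _ => by rewrite esym H1 in H2
  end.
Ltac dtac := apply/eqP => ?; subst; econtra2.

Lemma LX011 x y b c a5 c3p :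
  x \in A3 e B I0 ->
  y \in A3 e B I1 ->
  b \in B I0 ->
  c \in B I1 ->
  a5 \in B I4 ->
  c3p \in B I2 ->
  e x y ->
  ~~ e x b ->
  ~~ e y c ->
  ~~ e y b ->
  e x c ->
  e b c ->
  e x a5 ->
  e c c3p -> False.
Proof.
move=> A_x A_y H_b H_c H_a5 H_c3p F_x_y F_x_b F_y_c F_y_b F_x_c F_b_c F_x_a5 F_c_c3p.
have [O_x_nb O_x_w4 O_x_w0 O_x_w1 [O_x_n2 O_x_n3]] := A3_0 A_x.
have [O_y_nb O_y_w0 O_y_w1 O_y_w2 [O_y_n3 O_y_n4]] := A3_1 A_y.
have F_a5_y := O_y_n4 a5 H_a5.
have F_a5_c := anti SS4 H_a5 H_c.
have F_c3p_x := O_x_n2 c3p H_c3p.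
have F_c3p_b := anti SS0 H_b H_c3p.
have F_c3p_a5 := anti SS2 H_c3p H_a5.
have F_y_c3p : ~~ e y c3p.
{ apply/negP => F_y_c3p.
  have Dq1 : x != c3p := (out_ne O_x_nb H_c3p).
  have Dq2 : y != c := (out_ne O_y_nb H_c).
  by apply: (C4c Dq1 Dq2); fa.
}
have F_b_a5 : ~~ e b a5.
{ apply/negP => F_b_a5.
  have Dq1 : x != b := (out_ne O_x_nb H_b).
  have Dq2 : c != a5 := (bag_ne NE14 H_c H_a5).
  by apply: (C4c Dq1 Dq2); fa.
}
have [w2_38 H_w2_38 F_y_w2_38] := O_y_w2.
have F_w2_38_x := O_x_n2 w2_38 H_w2_38.
have F_w2_38_b := anti SS0 H_b H_w2_38.
have F_w2_38_a5 := anti SS2 H_w2_38 H_a5.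
have D_w2_38_c3p : w2_38 != c3p by dtac.
have F_w2_38_c3p : e w2_38 c3p := clq H_w2_38 H_c3p D_w2_38_c3p.
have F_c_w2_38 : ~~ e c w2_38.
{ apply/negP => F_c_w2_38.
  have Dq1 : x != w2_38 := (out_ne O_x_nb H_w2_38).
  have Dq2 : y != c := (out_ne O_y_nb H_c).
  by apply: (C4c Dq1 Dq2); fa.
}
have [w4_42 H_w4_42 F_b_w4_42] := nbrL S4 H_b.
have F_w4_42_y := O_y_n4 w4_42 H_w4_42.
have F_w4_42_c := anti SS4 H_w4_42 H_c.
have D_w4_42_a5 : w4_42 != a5 by dtac.
have F_w4_42_a5 : e w4_42 a5 := clq H_w4_42 H_a5 D_w4_42_a5.
have F_w4_42_c3p := anti SS2 H_c3p H_w4_42.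
have F_w4_42_w2_38 := anti SS2 H_w2_38 H_w4_42.
by apply: (P7c (v0:=y) (v1:=w2_38) (v2:=c3p) (v3:=c) (v4:=b) (v5:=w4_42) (v6:=a5)); fa.
Qed.

Lemma LX110 x y b c a5 c3p b2 c1 :
  x \in A3 e B I0 ->
  y \in A3 e B I1 ->
  b \in B I0 ->
  c \in B I1 ->
  a5 \in B I4 ->
  c3p \in B I2 ->
  b2 \in B I1 ->
  c1 \in B I0 ->
  e x y ->
  ~~ e x b ->
  ~~ e y c ->
  e y b ->
  e x c ->
  ~~ e b c ->
  e x a5 ->
  e c c3p ->
  e b b2 ->
  e c c1 -> False.
Proof.
move=> A_x A_y H_b H_c H_a5 H_c3p H_b2 H_c1 F_x_y F_x_b F_y_c F_y_b F_x_c F_b_c F_x_a5 F_c_c3p F_b_b2 F_c_c1.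
have [O_x_nb O_x_w4 O_x_w0 O_x_w1 [O_x_n2 O_x_n3]] := A3_0 A_x.
have [O_y_nb O_y_w0 O_y_w1 O_y_w2 [O_y_n3 O_y_n4]] := A3_1 A_y.
have F_a5_y := O_y_n4 a5 H_a5.
have F_a5_c := anti SS4 H_a5 H_c.
have F_c3p_x := O_x_n2 c3p H_c3p.
have F_c3p_b := anti SS0 H_b H_c3p.
have F_c3p_a5 := anti SS2 H_c3p H_a5.
have D_b2_c : b2 != c by dtac.
have F_b2_c : e b2 c := clq H_b2 H_c D_b2_c.
have F_b2_a5 := anti SS4 H_a5 H_b2.
have D_c1_b : c1 != b by dtac.
have F_c1_b : e c1 b := clq H_c1 H_b D_c1_b.
have F_c1_c3p := anti SS0 H_c1 H_c3p.
have F_y_c3p : ~~ e y c3p.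
{ apply/negP => F_y_c3p.
  have Dq1 : x != c3p := (out_ne O_x_nb H_c3p).
  have Dq2 : y != c := (out_ne O_y_nb H_c).
  by apply: (C4c Dq1 Dq2); fa.
}
have F_b_a5 : ~~ e b a5.
{ apply/negP => F_b_a5.
  have Dq1 : x != b := (out_ne O_x_nb H_b).
  have Dq2 : y != a5 := (out_ne O_y_nb H_a5).
  by apply: (C4c Dq1 Dq2); fa.
}
have F_c3p_b2 : e c3p b2.
{ apply/negPn/negP => F_c3p_b2.
  by apply: (P4c S0 S1 H_b H_b2 H_c H_c3p); fa.
}
have F_b2_c1 : e b2 c1.
{ apply/negPn/negP => F_b2_c1.
  have Dq1 : b != c := (bag_ne NE01 H_b H_c).
  have Dq2 : b2 != c1 := (bag_ne NE10 H_b2 H_c1).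
  by apply: (C4c Dq1 Dq2); fa.
}
have [w4_4 H_w4_4 F_b_w4_4] := nbrL S4 H_b.
have F_w4_4_y := O_y_n4 w4_4 H_w4_4.
have F_w4_4_c := anti SS4 H_w4_4 H_c.
have D_w4_4_a5 : w4_4 != a5 by dtac.
have F_w4_4_a5 : e w4_4 a5 := clq H_w4_4 H_a5 D_w4_4_a5.
have F_w4_4_c3p := anti SS2 H_c3p H_w4_4.
have F_w4_4_b2 := anti SS4 H_w4_4 H_b2.
case: (boolP (e x w4_4)) => F_x_w4_4.
{
  have Dq1 : x != b := (out_ne O_x_nb H_b).
  have Dq2 : y != w4_4 := (out_ne O_y_nb H_w4_4).
  by apply: (C4c Dq1 Dq2); fa.
}
{
  by apply: (S6c S2 S3 H_c3p H_w4_4 (fun w Hw => anti SS1 H_c Hw) O_x_n3 O_y_n3 (fun w Hw => sN esym (anti SS3 Hw H_b))); fa.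
}
Qed.

Lemma LX010 x y b c a5 c3p b2 c1 :
  x \in A3 e B I0 ->
  y \in A3 e B I1 ->
  b \in B I0 ->
  c \in B I1 ->
  a5 \in B I4 ->
  c3p \in B I2 ->
  b2 \in B I1 ->
  c1 \in B I0 ->
  e x y ->
  ~~ e x b ->
  ~~ e y c ->
  ~~ e y b ->
  e x c ->
  ~~ e b c ->
  e x a5 ->
  e c c3p ->
  e b b2 ->
  e c c1 -> False.
Proof.
move=> A_x A_y H_b H_c H_a5 H_c3p H_b2 H_c1 F_x_y F_x_b F_y_c F_y_b F_x_c F_b_c F_x_a5 F_c_c3p F_b_b2 F_c_c1.
have [O_x_nb O_x_w4 O_x_w0 O_x_w1 [O_x_n2 O_x_n3]] := A3_0 A_x.
have [O_y_nb O_y_w0 O_y_w1 O_y_w2 [O_y_n3 O_y_n4]] := A3_1 A_y.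
have F_a5_y := O_y_n4 a5 H_a5.
have F_a5_c := anti SS4 H_a5 H_c.
have F_c3p_x := O_x_n2 c3p H_c3p.
have F_c3p_b := anti SS0 H_b H_c3p.
have F_c3p_a5 := anti SS2 H_c3p H_a5.
have D_b2_c : b2 != c by dtac.
have F_b2_c : e b2 c := clq H_b2 H_c D_b2_c.
have F_b2_a5 := anti SS4 H_a5 H_b2.
have D_c1_b : c1 != b by dtac.
have F_c1_b : e c1 b := clq H_c1 H_b D_c1_b.
have F_c1_c3p := anti SS0 H_c1 H_c3p.
have F_y_c3p : ~~ e y c3p.
{ apply/negP => F_y_c3p.
  have Dq1 : x != c3p := (out_ne O_x_nb H_c3p).
  have Dq2 : y != c := (out_ne O_y_nb H_c).
  by apply: (C4c Dq1 Dq2); fa.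
}
have F_c3p_b2 : e c3p b2.
{ apply/negPn/negP => F_c3p_b2.
  by apply: (P4c S0 S1 H_b H_b2 H_c H_c3p); fa.
}
have F_b2_c1 : e b2 c1.
{ apply/negPn/negP => F_b2_c1.
  have Dq1 : b != c := (bag_ne NE01 H_b H_c).
  have Dq2 : b2 != c1 := (bag_ne NE10 H_b2 H_c1).
  by apply: (C4c Dq1 Dq2); fa.
}
have [w2_543 H_w2_543 F_y_w2_543] := O_y_w2.
have F_w2_543_x := O_x_n2 w2_543 H_w2_543.
have F_w2_543_b := anti SS0 H_b H_w2_543.
have F_w2_543_a5 := anti SS2 H_w2_543 H_a5.
have D_w2_543_c3p : w2_543 != c3p by dtac.
have F_w2_543_c3p : e w2_543 c3p := clq H_w2_543 H_c3p D_w2_543_c3p.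
have F_w2_543_c1 := anti SS0 H_c1 H_w2_543.
have F_c_w2_543 : ~~ e c w2_543.
{ apply/negP => F_c_w2_543.
  have Dq1 : x != w2_543 := (out_ne O_x_nb H_w2_543).
  have Dq2 : y != c := (out_ne O_y_nb H_c).
  by apply: (C4c Dq1 Dq2); fa.
}
have [w4_578 H_w4_578 F_b_w4_578] := nbrL S4 H_b.
case: (eqVneq w4_578 a5) => [EQ_w4_578_a5|D_w4_578_a5].
{ subst w4_578.
  have F_x_b2 : ~~ e x b2.
  { apply/negP => F_x_b2.
    have Dq1 : x != b := (out_ne O_x_nb H_b).
    have Dq2 : a5 != b2 := (bag_ne NE41 H_a5 H_b2).
    by apply: (C4c Dq1 Dq2); fa.
  }
  have F_y_b2 : ~~ e y b2.
  { apply/negP => F_y_b2.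
    have Dq1 : x != b2 := (out_ne O_x_nb H_b2).
    have Dq2 : y != c := (out_ne O_y_nb H_c).
    by apply: (C4c Dq1 Dq2); fa.
  }
  have F_a5_c1 : e a5 c1.
  { apply/negPn/negP => F_a5_c1.
    by apply: (P4c S4 S0 H_a5 H_b H_c1 H_c); fa.
  }
  case: (boolP (e b2 w2_543)) => F_b2_w2_543.
  {
    by apply: (S5c S2 S3 H_w2_543 H_a5 (fun w Hw => anti SS1 H_b2 Hw) (fun w Hw => anti SS1 H_c Hw) O_x_n3); fa.
  }
  {
    by apply: (C7c (v0:=x) (v1:=y) (v2:=w2_543) (v3:=c3p) (v4:=b2) (v5:=b) (v6:=a5)); fa.
  }
}
have F_w4_578_a5 : e w4_578 a5 := clq H_w4_578 H_a5 D_w4_578_a5.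
have F_w4_578_y := O_y_n4 w4_578 H_w4_578.
have F_w4_578_c := anti SS4 H_w4_578 H_c.
have F_w4_578_c3p := anti SS2 H_c3p H_w4_578.
have F_w4_578_b2 := anti SS4 H_w4_578 H_b2.
have F_w4_578_w2_543 := anti SS2 H_w2_543 H_w4_578.
have F_c1_w4_578 : e c1 w4_578.
{ apply/negPn/negP => F_c1_w4_578.
  by apply: (P4c S4 S0 H_w4_578 H_b H_c1 H_c); fa.
}
case: (boolP (e x b2)) => F_x_b2.
{
  have F_x_w4_578 : ~~ e x w4_578.
  { apply/negP => F_x_w4_578.
    have Dq1 : x != b := (out_ne O_x_nb H_b).
    have Dq2 : b2 != w4_578 := (bag_ne NE14 H_b2 H_w4_578).
    by apply: (C4c Dq1 Dq2); fa.
  }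
  case: (boolP (e b a5)) => F_b_a5.
  {
    have Dq1 : x != b := (out_ne O_x_nb H_b).
    have Dq2 : a5 != b2 := (bag_ne NE41 H_a5 H_b2).
    by apply: (C4c Dq1 Dq2); fa.
  }
  {
    by apply: (P7c (v0:=b) (v1:=w4_578) (v2:=a5) (v3:=x) (v4:=y) (v5:=w2_543) (v6:=c3p)); fa.
  }
}
{
  have F_y_b2 : ~~ e y b2.
  { apply/negP => F_y_b2.
    have Dq1 : x != b2 := (out_ne O_x_nb H_b2).
    have Dq2 : y != c := (out_ne O_y_nb H_c).
    by apply: (C4c Dq1 Dq2); fa.
  }
  have F_b2_w2_543 : ~~ e b2 w2_543.
  { apply/negP => F_b2_w2_543.
    by apply: (S5c S2 S3 H_w2_543 H_a5 (fun w Hw => anti SS1 H_b2 Hw) (fun w Hw => anti SS1 H_c Hw) O_x_n3); fa.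
  }
  case: (boolP (e x w4_578)) => F_x_w4_578.
  {
    by apply: (C7c (v0:=x) (v1:=y) (v2:=w2_543) (v3:=c3p) (v4:=b2) (v5:=b) (v6:=w4_578)); fa.
  }
  {
    by apply: (P7c (v0:=x) (v1:=y) (v2:=w2_543) (v3:=c3p) (v4:=b2) (v5:=b) (v6:=w4_578)); fa.
  }
}
Qed.

Lemma LX100 x y b c a5 c3p b2 c1 :
  x \in A3 e B I0 ->
  y \in A3 e B I1 ->
  b \in B I0 ->
  c \in B I1 ->
  a5 \in B I4 ->
  c3p \in B I2 ->
  b2 \in B I1 ->
  c1 \in B I0 ->
  e x y ->
  ~~ e x b ->
  ~~ e y c ->
  e y b ->
  ~~ e x c ->
  ~~ e b c ->
  e x a5 ->
  e c c3p ->
  e b b2 ->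
  e c c1 -> False.
Proof.
move=> A_x A_y H_b H_c H_a5 H_c3p H_b2 H_c1 F_x_y F_x_b F_y_c F_y_b F_x_c F_b_c F_x_a5 F_c_c3p F_b_b2 F_c_c1.
have [O_x_nb O_x_w4 O_x_w0 O_x_w1 [O_x_n2 O_x_n3]] := A3_0 A_x.
have [O_y_nb O_y_w0 O_y_w1 O_y_w2 [O_y_n3 O_y_n4]] := A3_1 A_y.
have F_a5_y := O_y_n4 a5 H_a5.
have F_a5_c := anti SS4 H_a5 H_c.
have F_c3p_x := O_x_n2 c3p H_c3p.
have F_c3p_b := anti SS0 H_b H_c3p.
have F_c3p_a5 := anti SS2 H_c3p H_a5.
have D_b2_c : b2 != c by dtac.
have F_b2_c : e b2 c := clq H_b2 H_c D_b2_c.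
have F_b2_a5 := anti SS4 H_a5 H_b2.
have D_c1_b : c1 != b by dtac.
have F_c1_b : e c1 b := clq H_c1 H_b D_c1_b.
have F_c1_c3p := anti SS0 H_c1 H_c3p.
have F_b_a5 : ~~ e b a5.
{ apply/negP => F_b_a5.
  have Dq1 : x != b := (out_ne O_x_nb H_b).
  have Dq2 : y != a5 := (out_ne O_y_nb H_a5).
  by apply: (C4c Dq1 Dq2); fa.
}
have F_c3p_b2 : e c3p b2.
{ apply/negPn/negP => F_c3p_b2.
  by apply: (P4c S0 S1 H_b H_b2 H_c H_c3p); fa.
}
have F_b2_c1 : e b2 c1.
{ apply/negPn/negP => F_b2_c1.
  have Dq1 : b != c := (bag_ne NE01 H_b H_c).
  have Dq2 : b2 != c1 := (bag_ne NE10 H_b2 H_c1).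
  by apply: (C4c Dq1 Dq2); fa.
}
have [w2_493 H_w2_493 F_y_w2_493] := O_y_w2.
case: (eqVneq w2_493 c3p) => [EQ_w2_493_c3p|D_w2_493_c3p].
{ subst w2_493.
  have F_y_b2 : e y b2.
  { apply/negPn/negP => F_y_b2.
    have Dq1 : y != b2 := (out_ne O_y_nb H_b2).
    have Dq2 : b != c3p := (bag_ne NE02 H_b H_c3p).
    by apply: (C4c Dq1 Dq2); fa.
  }
  have F_y_c1 : ~~ e y c1.
  { apply/negP => F_y_c1.
    have Dq1 : y != c := (out_ne O_y_nb H_c).
    have Dq2 : c3p != c1 := (bag_ne NE20 H_c3p H_c1).
    by apply: (C4c Dq1 Dq2); fa.
  }
  have F_a5_c1 : ~~ e a5 c1.
  { apply/negP => F_a5_c1.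
    by apply: (S5c S2 S3 H_c3p H_a5 O_y_n3 (fun w Hw => sN esym (anti SS3 Hw H_b)) (fun w Hw => sN esym (anti SS3 Hw H_c1))); fa.
  }
  have F_x_c1 : ~~ e x c1.
  { apply/negP => F_x_c1.
    have Dq1 : x != b := (out_ne O_x_nb H_b).
    have Dq2 : y != c1 := (out_ne O_y_nb H_c1).
    by apply: (C4c Dq1 Dq2); fa.
  }
  have [w0_494 H_w0_494 F_x_w0_494] := O_x_w0.
  have D_w0_494_b : w0_494 != b by dtac.
  have F_w0_494_b : e w0_494 b := clq H_w0_494 H_b D_w0_494_b.
  have F_w0_494_c3p := anti SS0 H_w0_494 H_c3p.
  have D_w0_494_c1 : w0_494 != c1 by dtac.
  have F_w0_494_c1 : e w0_494 c1 := clq H_w0_494 H_c1 D_w0_494_c1.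
  have F_y_w0_494 : e y w0_494.
  { apply/negPn/negP => F_y_w0_494.
    have Dq1 : x != b := (out_ne O_x_nb H_b).
    have Dq2 : y != w0_494 := (out_ne O_y_nb H_w0_494).
    by apply: (C4c Dq1 Dq2); fa.
  }
  have F_c_w0_494 : ~~ e c w0_494.
  { apply/negP => F_c_w0_494.
    have Dq1 : y != c := (out_ne O_y_nb H_c).
    have Dq2 : c3p != w0_494 := (bag_ne NE20 H_c3p H_w0_494).
    by apply: (C4c Dq1 Dq2); fa.
  }
  case: (boolP (e a5 w0_494)) => F_a5_w0_494.
  {
    by apply: (P4c S4 S0 H_a5 H_w0_494 H_c1 H_c); fa.
  }
  {
    by apply: (L5c S1 S2 S3 H_c H_a5 (fun w Hw => anti SS0 H_c1 Hw) (fun w Hw => anti SS0 H_w0_494 Hw) O_x_n2 (fun w Hw => sN esym (anti SS3 Hw H_c1)) (fun w Hw => sN esym (anti SS3 Hw H_w0_494)) O_x_n3); fa.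
  }
}
have F_w2_493_c3p : e w2_493 c3p := clq H_w2_493 H_c3p D_w2_493_c3p.
have F_w2_493_x := O_x_n2 w2_493 H_w2_493.
have F_w2_493_b := anti SS0 H_b H_w2_493.
have F_w2_493_a5 := anti SS2 H_w2_493 H_a5.
have F_w2_493_c1 := anti SS0 H_c1 H_w2_493.
have [w4_529 H_w4_529 F_b_w4_529] := nbrL S4 H_b.
have F_w4_529_y := O_y_n4 w4_529 H_w4_529.
have F_w4_529_c := anti SS4 H_w4_529 H_c.
have D_w4_529_a5 : w4_529 != a5 by dtac.
have F_w4_529_a5 : e w4_529 a5 := clq H_w4_529 H_a5 D_w4_529_a5.
have F_w4_529_c3p := anti SS2 H_c3p H_w4_529.
have F_w4_529_b2 := anti SS4 H_w4_529 H_b2.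
have F_w4_529_w2_493 := anti SS2 H_w2_493 H_w4_529.
have F_x_w4_529 : ~~ e x w4_529.
{ apply/negP => F_x_w4_529.
  have Dq1 : x != b := (out_ne O_x_nb H_b).
  have Dq2 : y != w4_529 := (out_ne O_y_nb H_w4_529).
  by apply: (C4c Dq1 Dq2); fa.
}
have F_c1_w4_529 : e c1 w4_529.
{ apply/negPn/negP => F_c1_w4_529.
  by apply: (P4c S4 S0 H_w4_529 H_b H_c1 H_c); fa.
}
case: (boolP (e y c3p)) => F_y_c3p.
{
  have F_y_b2 : e y b2.
  { apply/negPn/negP => F_y_b2.
    have Dq1 : y != b2 := (out_ne O_y_nb H_b2).
    have Dq2 : b != c3p := (bag_ne NE02 H_b H_c3p).
    by apply: (C4c Dq1 Dq2); fa.
  }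
  have F_y_c1 : ~~ e y c1.
  { apply/negP => F_y_c1.
    have Dq1 : y != c := (out_ne O_y_nb H_c).
    have Dq2 : c3p != c1 := (bag_ne NE20 H_c3p H_c1).
    by apply: (C4c Dq1 Dq2); fa.
  }
  have F_a5_c1 : ~~ e a5 c1.
  { apply/negP => F_a5_c1.
    by apply: (S5c S2 S3 H_c3p H_a5 O_y_n3 (fun w Hw => sN esym (anti SS3 Hw H_b)) (fun w Hw => sN esym (anti SS3 Hw H_c1))); fa.
  }
  have F_b2_w2_493 : e b2 w2_493.
  { apply/negPn/negP => F_b2_w2_493.
    by apply: (S5c S2 S3 H_w2_493 H_w4_529 O_y_n3 (fun w Hw => anti SS1 H_b2 Hw) (fun w Hw => sN esym (anti SS3 Hw H_c1))); fa.
  }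
  case: (boolP (e x c1)) => F_x_c1.
  {
    have Dq1 : x != b := (out_ne O_x_nb H_b).
    have Dq2 : y != c1 := (out_ne O_y_nb H_c1).
    by apply: (C4c Dq1 Dq2); fa.
  }
  {
    by apply: (C7c (v0:=x) (v1:=y) (v2:=c3p) (v3:=c) (v4:=c1) (v5:=w4_529) (v6:=a5)); fa.
  }
}
{
  have F_c_w2_493 : e c w2_493.
  { apply/negPn/negP => F_c_w2_493.
    by apply: (P7c (v0:=c) (v1:=c3p) (v2:=w2_493) (v3:=y) (v4:=x) (v5:=a5) (v6:=w4_529)); fa.
  }
  have F_b2_w2_493 : e b2 w2_493.
  { apply/negPn/negP => F_b2_w2_493.
    by apply: (P4c S0 S1 H_b H_b2 H_c H_w2_493); fa.
  }
  have F_y_b2 : e y b2.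
  { apply/negPn/negP => F_y_b2.
    have Dq1 : y != b2 := (out_ne O_y_nb H_b2).
    have Dq2 : b != w2_493 := (bag_ne NE02 H_b H_w2_493).
    by apply: (C4c Dq1 Dq2); fa.
  }
  have F_y_c1 : ~~ e y c1.
  { apply/negP => F_y_c1.
    have Dq1 : y != c := (out_ne O_y_nb H_c).
    have Dq2 : c1 != w2_493 := (bag_ne NE02 H_c1 H_w2_493).
    by apply: (C4c Dq1 Dq2); fa.
  }
  have F_a5_c1 : ~~ e a5 c1.
  { apply/negP => F_a5_c1.
    by apply: (S5c S2 S3 H_w2_493 H_a5 O_y_n3 (fun w Hw => sN esym (anti SS3 Hw H_b)) (fun w Hw => sN esym (anti SS3 Hw H_c1))); fa.
  }
  have F_x_b2 : e x b2.
  { apply/negPn/negP => F_x_b2.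
    by apply: (S5c S2 S3 H_c3p H_a5 (fun w Hw => anti SS1 H_b2 Hw) O_y_n3 O_x_n3); fa.
  }
  case: (boolP (e x c1)) => F_x_c1.
  {
    have Dq1 : x != b := (out_ne O_x_nb H_b).
    have Dq2 : y != c1 := (out_ne O_y_nb H_c1).
    by apply: (C4c Dq1 Dq2); fa.
  }
  {
    by apply: (C7c (v0:=x) (v1:=y) (v2:=w2_493) (v3:=c) (v4:=c1) (v5:=w4_529) (v6:=a5)); fa.
  }
}
Qed.

Lemma LX101 x y b c a5 c3p :
  x \in A3 e B I0 ->
  y \in A3 e B I1 ->
  b \in B I0 ->
  c \in B I1 ->
  a5 \in B I4 ->
  c3p \in B I2 ->
  e x y ->
  ~~ e x b ->
  ~~ e y c ->
  e y b ->
  ~~ e x c ->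
  e b c ->
  e x a5 ->
  e c c3p -> False.
Proof.
move=> A_x A_y H_b H_c H_a5 H_c3p F_x_y F_x_b F_y_c F_y_b F_x_c F_b_c F_x_a5 F_c_c3p.
have [O_x_nb O_x_w4 O_x_w0 O_x_w1 [O_x_n2 O_x_n3]] := A3_0 A_x.
have [O_y_nb O_y_w0 O_y_w1 O_y_w2 [O_y_n3 O_y_n4]] := A3_1 A_y.
have F_a5_y := O_y_n4 a5 H_a5.
have F_a5_c := anti SS4 H_a5 H_c.
have F_c3p_x := O_x_n2 c3p H_c3p.
have F_c3p_b := anti SS0 H_b H_c3p.
have F_c3p_a5 := anti SS2 H_c3p H_a5.
have F_y_c3p : ~~ e y c3p.
{ apply/negP => F_y_c3p.
  have Dq1 : y != c := (out_ne O_y_nb H_c).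
  have Dq2 : b != c3p := (bag_ne NE02 H_b H_c3p).
  by apply: (C4c Dq1 Dq2); fa.
}
case: (boolP (e b a5)) => F_b_a5.
{
  have Dq1 : x != b := (out_ne O_x_nb H_b).
  have Dq2 : y != a5 := (out_ne O_y_nb H_a5).
  by apply: (C4c Dq1 Dq2); fa.
}
{
  by apply: (S6c S2 S3 H_c3p H_a5 (fun w Hw => anti SS1 H_c Hw) (fun w Hw => sN esym (anti SS3 Hw H_b)) O_y_n3 O_x_n3); fa.
}
Qed.

Lemma LX111 x y b c a5 c3p :
  x \in A3 e B I0 ->
  y \in A3 e B I1 ->
  b \in B I0 ->
  c \in B I1 ->
  a5 \in B I4 ->
  c3p \in B I2 ->
  e x y ->
  ~~ e x b ->
  ~~ e y c ->
  e y b ->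
  e x c ->
  e b c ->
  e x a5 ->
  e c c3p -> False.
Proof.
move=> A_x A_y H_b H_c H_a5 H_c3p F_x_y F_x_b F_y_c F_y_b F_x_c F_b_c F_x_a5 F_c_c3p.
have [O_x_nb O_x_w4 O_x_w0 O_x_w1 [O_x_n2 O_x_n3]] := A3_0 A_x.
have [O_y_nb O_y_w0 O_y_w1 O_y_w2 [O_y_n3 O_y_n4]] := A3_1 A_y.
have F_a5_y := O_y_n4 a5 H_a5.
have F_a5_c := anti SS4 H_a5 H_c.
have F_c3p_x := O_x_n2 c3p H_c3p.
have F_c3p_b := anti SS0 H_b H_c3p.
have F_c3p_a5 := anti SS2 H_c3p H_a5.
have Dq1 : x != b := (out_ne O_x_nb H_b).
have Dq2 : y != c := (out_ne O_y_nb H_c).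
by apply: (C4c Dq1 Dq2); fa.
Qed.

Lemma LX000_00 x y b c a5 c3p u v b5 c3 :
  x \in A3 e B I0 ->
  y \in A3 e B I1 ->
  b \in B I0 ->
  c \in B I1 ->
  a5 \in B I4 ->
  c3p \in B I2 ->
  u \in B I0 ->
  v \in B I1 ->
  b5 \in B I4 ->
  c3 \in B I2 ->
  e x y ->
  ~~ e x b ->
  ~~ e y c ->
  ~~ e y b ->
  ~~ e x c ->
  ~~ e b c ->
  e x a5 ->
  e c c3p ->
  e x u ->
  e y u ->
  e x v ->
  e y v ->
  ~~ e b a5 ->
  ~~ e y c3p ->
  e b b5 ->
  e y c3 -> False.
Proof.
move=> A_x A_y H_b H_c H_a5 H_c3p H_u H_v H_b5 H_c3 F_x_y F_x_b F_y_c F_y_b F_x_c F_b_c F_x_a5 F_c_c3p F_x_u F_y_u F_x_v F_y_v F_b_a5 F_y_c3p F_b_b5 F_y_c3.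
have [O_x_nb O_x_w4 O_x_w0 O_x_w1 [O_x_n2 O_x_n3]] := A3_0 A_x.
have [O_y_nb O_y_w0 O_y_w1 O_y_w2 [O_y_n3 O_y_n4]] := A3_1 A_y.
have F_a5_y := O_y_n4 a5 H_a5.
have F_a5_c := anti SS4 H_a5 H_c.
have F_c3p_x := O_x_n2 c3p H_c3p.
have F_c3p_b := anti SS0 H_b H_c3p.
have F_c3p_a5 := anti SS2 H_c3p H_a5.
have D_u_b : u != b by dtac.
have F_u_b : e u b := clq H_u H_b D_u_b.
have F_u_c3p := anti SS0 H_u H_c3p.
have D_v_c : v != c by dtac.
have F_v_c : e v c := clq H_v H_c D_v_c.
have F_v_a5 := anti SS4 H_a5 H_v.
have F_b5_y := O_y_n4 b5 H_b5.
have F_b5_c := anti SS4 H_b5 H_c.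
have D_b5_a5 : b5 != a5 by dtac.
have F_b5_a5 : e b5 a5 := clq H_b5 H_a5 D_b5_a5.
have F_b5_c3p := anti SS2 H_c3p H_b5.
have F_b5_v := anti SS4 H_b5 H_v.
have F_c3_x := O_x_n2 c3 H_c3.
have F_c3_b := anti SS0 H_b H_c3.
have F_c3_a5 := anti SS2 H_c3 H_a5.
have D_c3_c3p : c3 != c3p by dtac.
have F_c3_c3p : e c3 c3p := clq H_c3 H_c3p D_c3_c3p.
have F_c3_u := anti SS0 H_u H_c3.
have F_c3_b5 := anti SS2 H_c3 H_b5.
have F_x_b5 : e x b5.
{ apply/negPn/negP => F_x_b5.
  by apply: (P7c (v0:=b) (v1:=b5) (v2:=a5) (v3:=x) (v4:=y) (v5:=c3) (v6:=c3p)); fa.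
}
have F_b_v : ~~ e b v.
{ apply/negP => F_b_v.
  have Dq1 : x != b := (out_ne O_x_nb H_b).
  have Dq2 : v != b5 := (bag_ne NE14 H_v H_b5).
  by apply: (C4c Dq1 Dq2); fa.
}
have F_c_c3 : e c c3.
{ apply/negPn/negP => F_c_c3.
  by apply: (P7c (v0:=b) (v1:=b5) (v2:=x) (v3:=y) (v4:=c3) (v5:=c3p) (v6:=c)); fa.
}
have F_c3p_v : e c3p v.
{ apply/negPn/negP => F_c3p_v.
  by apply: (S5c S2 S3 H_c3p H_a5 (fun w Hw => anti SS1 H_c Hw) (fun w Hw => anti SS1 H_v Hw) O_x_n3); fa.
}
have F_u_v : e u v.
{ apply/negPn/negP => F_u_v.
  by apply: (L4c S2 S3 S4 H_c3p H_u (fun w Hw => anti SS1 H_v Hw) O_y_n3 (fun w Hw => sN esym (anti SS4 Hw H_v)) O_y_n4); fa.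
}
have F_u_b5 : e u b5.
{ apply/negPn/negP => F_u_b5.
  have Dq1 : x != b := (out_ne O_x_nb H_b).
  have Dq2 : u != b5 := (bag_ne NE04 H_u H_b5).
  by apply: (C4c Dq1 Dq2); fa.
}
have F_v_c3 : e v c3.
{ apply/negPn/negP => F_v_c3.
  have Dq1 : y != c := (out_ne O_y_nb H_c).
  have Dq2 : v != c3 := (bag_ne NE12 H_v H_c3).
  by apply: (C4c Dq1 Dq2); fa.
}
have F_c_u : ~~ e c u.
{ apply/negP => F_c_u.
  have Dq1 : y != c := (out_ne O_y_nb H_c).
  have Dq2 : u != c3 := (bag_ne NE02 H_u H_c3).
  by apply: (C4c Dq1 Dq2); fa.
}
have [w1_1 H_w1_1 F_b_w1_1] := nbrR S0 H_b.
have D_w1_1_c : w1_1 != c by dtac.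
have F_w1_1_c : e w1_1 c := clq H_w1_1 H_c D_w1_1_c.
have F_w1_1_a5 := anti SS4 H_a5 H_w1_1.
have D_w1_1_v : w1_1 != v by dtac.
have F_w1_1_v : e w1_1 v := clq H_w1_1 H_v D_w1_1_v.
have F_w1_1_b5 := anti SS4 H_b5 H_w1_1.
have F_x_w1_1 : ~~ e x w1_1.
{ apply/negP => F_x_w1_1.
  have Dq1 : x != b := (out_ne O_x_nb H_b).
  have Dq2 : b5 != w1_1 := (bag_ne NE41 H_b5 H_w1_1).
  by apply: (C4c Dq1 Dq2); fa.
}
have F_c3p_w1_1 : e c3p w1_1.
{ apply/negPn/negP => F_c3p_w1_1.
  by apply: (P4c S0 S1 H_b H_w1_1 H_c H_c3p); fa.
}
have F_u_w1_1 : e u w1_1.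
{ apply/negPn/negP => F_u_w1_1.
  have Dq1 : b != v := (bag_ne NE01 H_b H_v).
  have Dq2 : u != w1_1 := (bag_ne NE01 H_u H_w1_1).
  by apply: (C4c Dq1 Dq2); fa.
}
have F_c3_w1_1 : e c3 w1_1.
{ apply/negPn/negP => F_c3_w1_1.
  by apply: (P4c S0 S1 H_b H_w1_1 H_c H_c3); fa.
}
case: (boolP (e y w1_1)) => F_y_w1_1.
{
  by apply: (S5c S2 S3 H_c3p H_a5 (fun w Hw => anti SS1 H_w1_1 Hw) O_y_n3 O_x_n3); fa.
}
{
  have Dq1 : y != w1_1 := (out_ne O_y_nb H_w1_1).
  have Dq2 : u != c3 := (bag_ne NE02 H_u H_c3).
  by apply: (C4c Dq1 Dq2); fa.
}
Qed.

Lemma LX000_01 x y b c a5 c3p u v b5 :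
  x \in A3 e B I0 ->
  y \in A3 e B I1 ->
  b \in B I0 ->
  c \in B I1 ->
  a5 \in B I4 ->
  c3p \in B I2 ->
  u \in B I0 ->
  v \in B I1 ->
  b5 \in B I4 ->
  e x y ->
  ~~ e x b ->
  ~~ e y c ->
  ~~ e y b ->
  ~~ e x c ->
  ~~ e b c ->
  e x a5 ->
  e c c3p ->
  e x u ->
  e y u ->
  e x v ->
  e y v ->
  ~~ e b a5 ->
  e y c3p ->
  e b b5 -> False.
Proof.
move=> A_x A_y H_b H_c H_a5 H_c3p H_u H_v H_b5 F_x_y F_x_b F_y_c F_y_b F_x_c F_b_c F_x_a5 F_c_c3p F_x_u F_y_u F_x_v F_y_v F_b_a5 F_y_c3p F_b_b5.
have [O_x_nb O_x_w4 O_x_w0 O_x_w1 [O_x_n2 O_x_n3]] := A3_0 A_x.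
have [O_y_nb O_y_w0 O_y_w1 O_y_w2 [O_y_n3 O_y_n4]] := A3_1 A_y.
have F_a5_y := O_y_n4 a5 H_a5.
have F_a5_c := anti SS4 H_a5 H_c.
have F_c3p_x := O_x_n2 c3p H_c3p.
have F_c3p_b := anti SS0 H_b H_c3p.
have F_c3p_a5 := anti SS2 H_c3p H_a5.
have D_u_b : u != b by dtac.
have F_u_b : e u b := clq H_u H_b D_u_b.
have F_u_c3p := anti SS0 H_u H_c3p.
have D_v_c : v != c by dtac.
have F_v_c : e v c := clq H_v H_c D_v_c.
have F_v_a5 := anti SS4 H_a5 H_v.
have F_b5_y := O_y_n4 b5 H_b5.
have F_b5_c := anti SS4 H_b5 H_c.
have D_b5_a5 : b5 != a5 by dtac.
have F_b5_a5 : e b5 a5 := clq H_b5 H_a5 D_b5_a5.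
have F_b5_c3p := anti SS2 H_c3p H_b5.
have F_b5_v := anti SS4 H_b5 H_v.
have F_x_b5 : e x b5.
{ apply/negPn/negP => F_x_b5.
  by apply: (P7c (v0:=b) (v1:=b5) (v2:=a5) (v3:=x) (v4:=y) (v5:=c3p) (v6:=c)); fa.
}
have F_b_v : ~~ e b v.
{ apply/negP => F_b_v.
  have Dq1 : x != b := (out_ne O_x_nb H_b).
  have Dq2 : v != b5 := (bag_ne NE14 H_v H_b5).
  by apply: (C4c Dq1 Dq2); fa.
}
have F_c_u : ~~ e c u.
{ apply/negP => F_c_u.
  have Dq1 : y != c := (out_ne O_y_nb H_c).
  have Dq2 : c3p != u := (bag_ne NE20 H_c3p H_u).
  by apply: (C4c Dq1 Dq2); fa.
}
have F_c3p_v : e c3p v.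
{ apply/negPn/negP => F_c3p_v.
  have Dq1 : y != c := (out_ne O_y_nb H_c).
  have Dq2 : c3p != v := (bag_ne NE21 H_c3p H_v).
  by apply: (C4c Dq1 Dq2); fa.
}
have F_u_b5 : e u b5.
{ apply/negPn/negP => F_u_b5.
  have Dq1 : x != b := (out_ne O_x_nb H_b).
  have Dq2 : u != b5 := (bag_ne NE04 H_u H_b5).
  by apply: (C4c Dq1 Dq2); fa.
}
have [w1_9 H_w1_9 F_b_w1_9] := nbrR S0 H_b.
have D_w1_9_c : w1_9 != c by dtac.
have F_w1_9_c : e w1_9 c := clq H_w1_9 H_c D_w1_9_c.
have F_w1_9_a5 := anti SS4 H_a5 H_w1_9.
have D_w1_9_v : w1_9 != v by dtac.
have F_w1_9_v : e w1_9 v := clq H_w1_9 H_v D_w1_9_v.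
have F_w1_9_b5 := anti SS4 H_b5 H_w1_9.
have F_x_w1_9 : ~~ e x w1_9.
{ apply/negP => F_x_w1_9.
  have Dq1 : x != b := (out_ne O_x_nb H_b).
  have Dq2 : b5 != w1_9 := (bag_ne NE41 H_b5 H_w1_9).
  by apply: (C4c Dq1 Dq2); fa.
}
have F_c3p_w1_9 : e c3p w1_9.
{ apply/negPn/negP => F_c3p_w1_9.
  by apply: (P4c S0 S1 H_b H_w1_9 H_c H_c3p); fa.
}
have F_y_w1_9 : e y w1_9.
{ apply/negPn/negP => F_y_w1_9.
  by apply: (C6c (v0:=x) (v1:=y) (v2:=c3p) (v3:=w1_9) (v4:=b) (v5:=b5)); fa.
}
have F_u_w1_9 : e u w1_9.
{ apply/negPn/negP => F_u_w1_9.
  have Dq1 : y != b := (out_ne O_y_nb H_b).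
  have Dq2 : u != w1_9 := (bag_ne NE01 H_u H_w1_9).
  by apply: (C4c Dq1 Dq2); fa.
}
have F_a5_u : e a5 u.
{ apply/negPn/negP => F_a5_u.
  by apply: (S5c S2 S3 H_c3p H_a5 (fun w Hw => anti SS1 H_w1_9 Hw) (fun w Hw => sN esym (anti SS3 Hw H_u)) O_x_n3); fa.
}
have F_u_v : e u v.
{ apply/negPn/negP => F_u_v.
  have Dq1 : x != w1_9 := (out_ne O_x_nb H_w1_9).
  have Dq2 : u != v := (bag_ne NE01 H_u H_v).
  by apply: (C4c Dq1 Dq2); fa.
}
have [w0_10 H_w0_10 F_c_w0_10] := nbrL S0 H_c.
have D_w0_10_b : w0_10 != b by dtac.
have F_w0_10_b : e w0_10 b := clq H_w0_10 H_b D_w0_10_b.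
have F_w0_10_c3p := anti SS0 H_w0_10 H_c3p.
have D_w0_10_u : w0_10 != u by dtac.
have F_w0_10_u : e w0_10 u := clq H_w0_10 H_u D_w0_10_u.
have F_y_w0_10 : ~~ e y w0_10.
{ apply/negP => F_y_w0_10.
  have Dq1 : y != c := (out_ne O_y_nb H_c).
  have Dq2 : c3p != w0_10 := (bag_ne NE20 H_c3p H_w0_10).
  by apply: (C4c Dq1 Dq2); fa.
}
have F_a5_w0_10 : e a5 w0_10.
{ apply/negPn/negP => F_a5_w0_10.
  by apply: (P4c S4 S0 H_a5 H_u H_w0_10 H_c); fa.
}
have F_v_w0_10 : e v w0_10.
{ apply/negPn/negP => F_v_w0_10.
  have Dq1 : c != u := (bag_ne NE10 H_c H_u).
  have Dq2 : v != w0_10 := (bag_ne NE10 H_v H_w0_10).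
  by apply: (C4c Dq1 Dq2); fa.
}
have F_b5_w0_10 : e b5 w0_10.
{ apply/negPn/negP => F_b5_w0_10.
  have Dq1 : b != a5 := (bag_ne NE04 H_b H_a5).
  have Dq2 : b5 != w0_10 := (bag_ne NE40 H_b5 H_w0_10).
  by apply: (C4c Dq1 Dq2); fa.
}
have F_w1_9_w0_10 : e w1_9 w0_10.
{ apply/negPn/negP => F_w1_9_w0_10.
  have Dq1 : b != c := (bag_ne NE01 H_b H_c).
  have Dq2 : w1_9 != w0_10 := (bag_ne NE10 H_w1_9 H_w0_10).
  by apply: (C4c Dq1 Dq2); fa.
}
case: (boolP (e x w0_10)) => F_x_w0_10.
{
  have Dq1 : x != w1_9 := (out_ne O_x_nb H_w1_9).
  have Dq2 : y != w0_10 := (out_ne O_y_nb H_w0_10).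
  by apply: (C4c Dq1 Dq2); fa.
}
{
  have Dq1 : x != w0_10 := (out_ne O_x_nb H_w0_10).
  have Dq2 : a5 != v := (bag_ne NE41 H_a5 H_v).
  by apply: (C4c Dq1 Dq2); fa.
}
Qed.

Lemma LX000_10 x y b c a5 c3p u v c3 :
  x \in A3 e B I0 ->
  y \in A3 e B I1 ->
  b \in B I0 ->
  c \in B I1 ->
  a5 \in B I4 ->
  c3p \in B I2 ->
  u \in B I0 ->
  v \in B I1 ->
  c3 \in B I2 ->
  e x y ->
  ~~ e x b ->
  ~~ e y c ->
  ~~ e y b ->
  ~~ e x c ->
  ~~ e b c ->
  e x a5 ->
  e c c3p ->
  e x u ->
  e y u ->
  e x v ->
  e y v ->
  e b a5 ->
  ~~ e y c3p ->
  e y c3 -> False.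
Proof.
move=> A_x A_y H_b H_c H_a5 H_c3p H_u H_v H_c3 F_x_y F_x_b F_y_c F_y_b F_x_c F_b_c F_x_a5 F_c_c3p F_x_u F_y_u F_x_v F_y_v F_b_a5 F_y_c3p F_y_c3.
have [O_x_nb O_x_w4 O_x_w0 O_x_w1 [O_x_n2 O_x_n3]] := A3_0 A_x.
have [O_y_nb O_y_w0 O_y_w1 O_y_w2 [O_y_n3 O_y_n4]] := A3_1 A_y.
have F_a5_y := O_y_n4 a5 H_a5.
have F_a5_c := anti SS4 H_a5 H_c.
have F_c3p_x := O_x_n2 c3p H_c3p.
have F_c3p_b := anti SS0 H_b H_c3p.
have F_c3p_a5 := anti SS2 H_c3p H_a5.
have D_u_b : u != b by dtac.
have F_u_b : e u b := clq H_u H_b D_u_b.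
have F_u_c3p := anti SS0 H_u H_c3p.
have D_v_c : v != c by dtac.
have F_v_c : e v c := clq H_v H_c D_v_c.
have F_v_a5 := anti SS4 H_a5 H_v.
have F_c3_x := O_x_n2 c3 H_c3.
have F_c3_b := anti SS0 H_b H_c3.
have F_c3_a5 := anti SS2 H_c3 H_a5.
have D_c3_c3p : c3 != c3p by dtac.
have F_c3_c3p : e c3 c3p := clq H_c3 H_c3p D_c3_c3p.
have F_c3_u := anti SS0 H_u H_c3.
have F_b_v : ~~ e b v.
{ apply/negP => F_b_v.
  have Dq1 : x != b := (out_ne O_x_nb H_b).
  have Dq2 : a5 != v := (bag_ne NE41 H_a5 H_v).
  by apply: (C4c Dq1 Dq2); fa.
}
have F_c_c3 : e c c3.
{ apply/negPn/negP => F_c_c3.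
  by apply: (P7c (v0:=b) (v1:=a5) (v2:=x) (v3:=y) (v4:=c3) (v5:=c3p) (v6:=c)); fa.
}
have F_a5_u : e a5 u.
{ apply/negPn/negP => F_a5_u.
  have Dq1 : x != b := (out_ne O_x_nb H_b).
  have Dq2 : a5 != u := (bag_ne NE40 H_a5 H_u).
  by apply: (C4c Dq1 Dq2); fa.
}
have F_c3p_v : e c3p v.
{ apply/negPn/negP => F_c3p_v.
  by apply: (S5c S2 S3 H_c3p H_a5 (fun w Hw => anti SS1 H_c Hw) (fun w Hw => anti SS1 H_v Hw) O_x_n3); fa.
}
have F_u_v : e u v.
{ apply/negPn/negP => F_u_v.
  by apply: (S5c S2 S3 H_c3p H_a5 (fun w Hw => anti SS1 H_v Hw) O_y_n3 (fun w Hw => sN esym (anti SS3 Hw H_u))); fa.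
}
have F_v_c3 : e v c3.
{ apply/negPn/negP => F_v_c3.
  have Dq1 : y != c := (out_ne O_y_nb H_c).
  have Dq2 : v != c3 := (bag_ne NE12 H_v H_c3).
  by apply: (C4c Dq1 Dq2); fa.
}
have F_c_u : ~~ e c u.
{ apply/negP => F_c_u.
  have Dq1 : y != c := (out_ne O_y_nb H_c).
  have Dq2 : u != c3 := (bag_ne NE02 H_u H_c3).
  by apply: (C4c Dq1 Dq2); fa.
}
have [w1_1 H_w1_1 F_b_w1_1] := nbrR S0 H_b.
have D_w1_1_c : w1_1 != c by dtac.
have F_w1_1_c : e w1_1 c := clq H_w1_1 H_c D_w1_1_c.
have F_w1_1_a5 := anti SS4 H_a5 H_w1_1.
have D_w1_1_v : w1_1 != v by dtac.
have F_w1_1_v : e w1_1 v := clq H_w1_1 H_v D_w1_1_v.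
have F_x_w1_1 : ~~ e x w1_1.
{ apply/negP => F_x_w1_1.
  have Dq1 : x != b := (out_ne O_x_nb H_b).
  have Dq2 : a5 != w1_1 := (bag_ne NE41 H_a5 H_w1_1).
  by apply: (C4c Dq1 Dq2); fa.
}
have F_c3p_w1_1 : e c3p w1_1.
{ apply/negPn/negP => F_c3p_w1_1.
  by apply: (P4c S0 S1 H_b H_w1_1 H_c H_c3p); fa.
}
have F_u_w1_1 : e u w1_1.
{ apply/negPn/negP => F_u_w1_1.
  have Dq1 : b != v := (bag_ne NE01 H_b H_v).
  have Dq2 : u != w1_1 := (bag_ne NE01 H_u H_w1_1).
  by apply: (C4c Dq1 Dq2); fa.
}
have F_c3_w1_1 : e c3 w1_1.
{ apply/negPn/negP => F_c3_w1_1.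
  by apply: (P4c S0 S1 H_b H_w1_1 H_c H_c3); fa.
}
case: (boolP (e y w1_1)) => F_y_w1_1.
{
  by apply: (S5c S2 S3 H_c3p H_a5 (fun w Hw => anti SS1 H_w1_1 Hw) O_y_n3 O_x_n3); fa.
}
{
  have Dq1 : y != w1_1 := (out_ne O_y_nb H_w1_1).
  have Dq2 : u != c3 := (bag_ne NE02 H_u H_c3).
  by apply: (C4c Dq1 Dq2); fa.
}
Qed.

Lemma LX000_11 x y b c a5 c3p u v :
  x \in A3 e B I0 ->
  y \in A3 e B I1 ->
  b \in B I0 ->
  c \in B I1 ->
  a5 \in B I4 ->
  c3p \in B I2 ->
  u \in B I0 ->
  v \in B I1 ->
  e x y ->
  ~~ e x b ->
  ~~ e y c ->
  ~~ e y b ->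
  ~~ e x c ->
  ~~ e b c ->
  e x a5 ->
  e c c3p ->
  e x u ->
  e y u ->
  e x v ->
  e y v ->
  e b a5 ->
  e y c3p -> False.
Proof.
move=> A_x A_y H_b H_c H_a5 H_c3p H_u H_v F_x_y F_x_b F_y_c F_y_b F_x_c F_b_c F_x_a5 F_c_c3p F_x_u F_y_u F_x_v F_y_v F_b_a5 F_y_c3p.
have [O_x_nb O_x_w4 O_x_w0 O_x_w1 [O_x_n2 O_x_n3]] := A3_0 A_x.
have [O_y_nb O_y_w0 O_y_w1 O_y_w2 [O_y_n3 O_y_n4]] := A3_1 A_y.
have F_a5_y := O_y_n4 a5 H_a5.
have F_a5_c := anti SS4 H_a5 H_c.
have F_c3p_x := O_x_n2 c3p H_c3p.
have F_c3p_b := anti SS0 H_b H_c3p.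
have F_c3p_a5 := anti SS2 H_c3p H_a5.
have D_u_b : u != b by dtac.
have F_u_b : e u b := clq H_u H_b D_u_b.
have F_u_c3p := anti SS0 H_u H_c3p.
have D_v_c : v != c by dtac.
have F_v_c : e v c := clq H_v H_c D_v_c.
have F_v_a5 := anti SS4 H_a5 H_v.
have F_b_v : ~~ e b v.
{ apply/negP => F_b_v.
  have Dq1 : x != b := (out_ne O_x_nb H_b).
  have Dq2 : a5 != v := (bag_ne NE41 H_a5 H_v).
  by apply: (C4c Dq1 Dq2); fa.
}
have F_c_u : ~~ e c u.
{ apply/negP => F_c_u.
  have Dq1 : y != c := (out_ne O_y_nb H_c).
  have Dq2 : c3p != u := (bag_ne NE20 H_c3p H_u).
  by apply: (C4c Dq1 Dq2); fa.
}
have F_a5_u : e a5 u.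
{ apply/negPn/negP => F_a5_u.
  have Dq1 : x != b := (out_ne O_x_nb H_b).
  have Dq2 : a5 != u := (bag_ne NE40 H_a5 H_u).
  by apply: (C4c Dq1 Dq2); fa.
}
have F_c3p_v : e c3p v.
{ apply/negPn/negP => F_c3p_v.
  have Dq1 : y != c := (out_ne O_y_nb H_c).
  have Dq2 : c3p != v := (bag_ne NE21 H_c3p H_v).
  by apply: (C4c Dq1 Dq2); fa.
}
have [w1_7 H_w1_7 F_b_w1_7] := nbrR S0 H_b.
have D_w1_7_c : w1_7 != c by dtac.
have F_w1_7_c : e w1_7 c := clq H_w1_7 H_c D_w1_7_c.
have F_w1_7_a5 := anti SS4 H_a5 H_w1_7.
have D_w1_7_v : w1_7 != v by dtac.
have F_w1_7_v : e w1_7 v := clq H_w1_7 H_v D_w1_7_v.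
have F_x_w1_7 : ~~ e x w1_7.
{ apply/negP => F_x_w1_7.
  have Dq1 : x != b := (out_ne O_x_nb H_b).
  have Dq2 : a5 != w1_7 := (bag_ne NE41 H_a5 H_w1_7).
  by apply: (C4c Dq1 Dq2); fa.
}
have F_c3p_w1_7 : e c3p w1_7.
{ apply/negPn/negP => F_c3p_w1_7.
  by apply: (P4c S0 S1 H_b H_w1_7 H_c H_c3p); fa.
}
have F_y_w1_7 : e y w1_7.
{ apply/negPn/negP => F_y_w1_7.
  by apply: (C6c (v0:=x) (v1:=y) (v2:=c3p) (v3:=w1_7) (v4:=b) (v5:=a5)); fa.
}
have F_u_w1_7 : e u w1_7.
{ apply/negPn/negP => F_u_w1_7.
  have Dq1 : y != b := (out_ne O_y_nb H_b).
  have Dq2 : u != w1_7 := (bag_ne NE01 H_u H_w1_7).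
  by apply: (C4c Dq1 Dq2); fa.
}
have F_u_v : e u v.
{ apply/negPn/negP => F_u_v.
  have Dq1 : x != w1_7 := (out_ne O_x_nb H_w1_7).
  have Dq2 : u != v := (bag_ne NE01 H_u H_v).
  by apply: (C4c Dq1 Dq2); fa.
}
have [w0_8 H_w0_8 F_c_w0_8] := nbrL S0 H_c.
have D_w0_8_b : w0_8 != b by dtac.
have F_w0_8_b : e w0_8 b := clq H_w0_8 H_b D_w0_8_b.
have F_w0_8_c3p := anti SS0 H_w0_8 H_c3p.
have D_w0_8_u : w0_8 != u by dtac.
have F_w0_8_u : e w0_8 u := clq H_w0_8 H_u D_w0_8_u.
have F_y_w0_8 : ~~ e y w0_8.
{ apply/negP => F_y_w0_8.
  have Dq1 : y != c := (out_ne O_y_nb H_c).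
  have Dq2 : c3p != w0_8 := (bag_ne NE20 H_c3p H_w0_8).
  by apply: (C4c Dq1 Dq2); fa.
}
have F_a5_w0_8 : e a5 w0_8.
{ apply/negPn/negP => F_a5_w0_8.
  by apply: (P4c S4 S0 H_a5 H_b H_w0_8 H_c); fa.
}
have F_v_w0_8 : e v w0_8.
{ apply/negPn/negP => F_v_w0_8.
  have Dq1 : c != u := (bag_ne NE10 H_c H_u).
  have Dq2 : v != w0_8 := (bag_ne NE10 H_v H_w0_8).
  by apply: (C4c Dq1 Dq2); fa.
}
have F_w1_7_w0_8 : e w1_7 w0_8.
{ apply/negPn/negP => F_w1_7_w0_8.
  have Dq1 : b != c := (bag_ne NE01 H_b H_c).
  have Dq2 : w1_7 != w0_8 := (bag_ne NE10 H_w1_7 H_w0_8).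
  by apply: (C4c Dq1 Dq2); fa.
}
case: (boolP (e x w0_8)) => F_x_w0_8.
{
  have Dq1 : x != w1_7 := (out_ne O_x_nb H_w1_7).
  have Dq2 : y != w0_8 := (out_ne O_y_nb H_w0_8).
  by apply: (C4c Dq1 Dq2); fa.
}
{
  have Dq1 : x != w0_8 := (out_ne O_x_nb H_w0_8).
  have Dq2 : a5 != v := (bag_ne NE41 H_a5 H_v).
  by apply: (C4c Dq1 Dq2); fa.
}
Qed.

Lemma LX001_00 x y b c a5 c3p u v b5 c3 :
  x \in A3 e B I0 ->
  y \in A3 e B I1 ->
  b \in B I0 ->
  c \in B I1 ->
  a5 \in B I4 ->
  c3p \in B I2 ->
  u \in B I0 ->
  v \in B I1 ->
  b5 \in B I4 ->
  c3 \in B I2 ->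
  e x y ->
  ~~ e x b ->
  ~~ e y c ->
  ~~ e y b ->
  ~~ e x c ->
  e b c ->
  e x a5 ->
  e c c3p ->
  e x u ->
  e y u ->
  e x v ->
  e y v ->
  ~~ e b a5 ->
  ~~ e y c3p ->
  e b b5 ->
  e y c3 -> False.
Proof.
move=> A_x A_y H_b H_c H_a5 H_c3p H_u H_v H_b5 H_c3 F_x_y F_x_b F_y_c F_y_b F_x_c F_b_c F_x_a5 F_c_c3p F_x_u F_y_u F_x_v F_y_v F_b_a5 F_y_c3p F_b_b5 F_y_c3.
have [O_x_nb O_x_w4 O_x_w0 O_x_w1 [O_x_n2 O_x_n3]] := A3_0 A_x.
have [O_y_nb O_y_w0 O_y_w1 O_y_w2 [O_y_n3 O_y_n4]] := A3_1 A_y.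
have F_a5_y := O_y_n4 a5 H_a5.
have F_a5_c := anti SS4 H_a5 H_c.
have F_c3p_x := O_x_n2 c3p H_c3p.
have F_c3p_b := anti SS0 H_b H_c3p.
have F_c3p_a5 := anti SS2 H_c3p H_a5.
have D_u_b : u != b by dtac.
have F_u_b : e u b := clq H_u H_b D_u_b.
have F_u_c3p := anti SS0 H_u H_c3p.
have D_v_c : v != c by dtac.
have F_v_c : e v c := clq H_v H_c D_v_c.
have F_v_a5 := anti SS4 H_a5 H_v.
have F_b5_y := O_y_n4 b5 H_b5.
have F_b5_c := anti SS4 H_b5 H_c.
have D_b5_a5 : b5 != a5 by dtac.
have F_b5_a5 : e b5 a5 := clq H_b5 H_a5 D_b5_a5.
have F_b5_c3p := anti SS2 H_c3p H_b5.
have F_b5_v := anti SS4 H_b5 H_v.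
have F_c3_x := O_x_n2 c3 H_c3.
have F_c3_b := anti SS0 H_b H_c3.
have F_c3_a5 := anti SS2 H_c3 H_a5.
have D_c3_c3p : c3 != c3p by dtac.
have F_c3_c3p : e c3 c3p := clq H_c3 H_c3p D_c3_c3p.
have F_c3_u := anti SS0 H_u H_c3.
have F_c3_b5 := anti SS2 H_c3 H_b5.
have F_x_b5 : e x b5.
{ apply/negPn/negP => F_x_b5.
  by apply: (P7c (v0:=y) (v1:=x) (v2:=a5) (v3:=b5) (v4:=b) (v5:=c) (v6:=c3p)); fa.
}
have F_b_v : ~~ e b v.
{ apply/negP => F_b_v.
  have Dq1 : x != b := (out_ne O_x_nb H_b).
  have Dq2 : v != b5 := (bag_ne NE14 H_v H_b5).
  by apply: (C4c Dq1 Dq2); fa.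
}
case: (boolP (e c c3)) => F_c_c3.
{
  by apply: (C6c (v0:=x) (v1:=y) (v2:=c3) (v3:=c) (v4:=b) (v5:=b5)); fa.
}
{
  by apply: (C7c (v0:=x) (v1:=y) (v2:=c3) (v3:=c3p) (v4:=c) (v5:=b) (v6:=b5)); fa.
}
Qed.

Lemma LX001_01 x y b c a5 c3p u v b5 :
  x \in A3 e B I0 ->
  y \in A3 e B I1 ->
  b \in B I0 ->
  c \in B I1 ->
  a5 \in B I4 ->
  c3p \in B I2 ->
  u \in B I0 ->
  v \in B I1 ->
  b5 \in B I4 ->
  e x y ->
  ~~ e x b ->
  ~~ e y c ->
  ~~ e y b ->
  ~~ e x c ->
  e b c ->
  e x a5 ->
  e c c3p ->
  e x u ->
  e y u ->
  e x v ->
  e y v ->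
  ~~ e b a5 ->
  e y c3p ->
  e b b5 -> False.
Proof.
move=> A_x A_y H_b H_c H_a5 H_c3p H_u H_v H_b5 F_x_y F_x_b F_y_c F_y_b F_x_c F_b_c F_x_a5 F_c_c3p F_x_u F_y_u F_x_v F_y_v F_b_a5 F_y_c3p F_b_b5.
have [O_x_nb O_x_w4 O_x_w0 O_x_w1 [O_x_n2 O_x_n3]] := A3_0 A_x.
have [O_y_nb O_y_w0 O_y_w1 O_y_w2 [O_y_n3 O_y_n4]] := A3_1 A_y.
have F_a5_y := O_y_n4 a5 H_a5.
have F_a5_c := anti SS4 H_a5 H_c.
have F_c3p_x := O_x_n2 c3p H_c3p.
have F_c3p_b := anti SS0 H_b H_c3p.
have F_c3p_a5 := anti SS2 H_c3p H_a5.
have D_u_b : u != b by dtac.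
have F_u_b : e u b := clq H_u H_b D_u_b.
have F_u_c3p := anti SS0 H_u H_c3p.
have D_v_c : v != c by dtac.
have F_v_c : e v c := clq H_v H_c D_v_c.
have F_v_a5 := anti SS4 H_a5 H_v.
have F_b5_y := O_y_n4 b5 H_b5.
have F_b5_c := anti SS4 H_b5 H_c.
have D_b5_a5 : b5 != a5 by dtac.
have F_b5_a5 : e b5 a5 := clq H_b5 H_a5 D_b5_a5.
have F_b5_c3p := anti SS2 H_c3p H_b5.
have F_b5_v := anti SS4 H_b5 H_v.
case: (boolP (e x b5)) => F_x_b5.
{
  by apply: (C6c (v0:=x) (v1:=y) (v2:=c3p) (v3:=c) (v4:=b) (v5:=b5)); fa.
}
{
  by apply: (C7c (v0:=x) (v1:=y) (v2:=c3p) (v3:=c) (v4:=b) (v5:=b5) (v6:=a5)); fa.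
}
Qed.

Lemma LX001_10 x y b c a5 c3p u v c3 :
  x \in A3 e B I0 ->
  y \in A3 e B I1 ->
  b \in B I0 ->
  c \in B I1 ->
  a5 \in B I4 ->
  c3p \in B I2 ->
  u \in B I0 ->
  v \in B I1 ->
  c3 \in B I2 ->
  e x y ->
  ~~ e x b ->
  ~~ e y c ->
  ~~ e y b ->
  ~~ e x c ->
  e b c ->
  e x a5 ->
  e c c3p ->
  e x u ->
  e y u ->
  e x v ->
  e y v ->
  e b a5 ->
  ~~ e y c3p ->
  e y c3 -> False.
Proof.
move=> A_x A_y H_b H_c H_a5 H_c3p H_u H_v H_c3 F_x_y F_x_b F_y_c F_y_b F_x_c F_b_c F_x_a5 F_c_c3p F_x_u F_y_u F_x_v F_y_v F_b_a5 F_y_c3p F_y_c3.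
have [O_x_nb O_x_w4 O_x_w0 O_x_w1 [O_x_n2 O_x_n3]] := A3_0 A_x.
have [O_y_nb O_y_w0 O_y_w1 O_y_w2 [O_y_n3 O_y_n4]] := A3_1 A_y.
have F_a5_y := O_y_n4 a5 H_a5.
have F_a5_c := anti SS4 H_a5 H_c.
have F_c3p_x := O_x_n2 c3p H_c3p.
have F_c3p_b := anti SS0 H_b H_c3p.
have F_c3p_a5 := anti SS2 H_c3p H_a5.
have D_u_b : u != b by dtac.
have F_u_b : e u b := clq H_u H_b D_u_b.
have F_u_c3p := anti SS0 H_u H_c3p.
have D_v_c : v != c by dtac.
have F_v_c : e v c := clq H_v H_c D_v_c.
have F_v_a5 := anti SS4 H_a5 H_v.
have F_c3_x := O_x_n2 c3 H_c3.
have F_c3_b := anti SS0 H_b H_c3.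
have F_c3_a5 := anti SS2 H_c3 H_a5.
have D_c3_c3p : c3 != c3p by dtac.
have F_c3_c3p : e c3 c3p := clq H_c3 H_c3p D_c3_c3p.
have F_c3_u := anti SS0 H_u H_c3.
have F_b_v : ~~ e b v.
{ apply/negP => F_b_v.
  have Dq1 : x != b := (out_ne O_x_nb H_b).
  have Dq2 : a5 != v := (bag_ne NE41 H_a5 H_v).
  by apply: (C4c Dq1 Dq2); fa.
}
case: (boolP (e c c3)) => F_c_c3.
{
  by apply: (C6c (v0:=x) (v1:=y) (v2:=c3) (v3:=c) (v4:=b) (v5:=a5)); fa.
}
{
  by apply: (C7c (v0:=x) (v1:=y) (v2:=c3) (v3:=c3p) (v4:=c) (v5:=b) (v6:=a5)); fa.
}
Qed.

Lemma LX001_11 x y b c a5 c3p u v :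
  x \in A3 e B I0 ->
  y \in A3 e B I1 ->
  b \in B I0 ->
  c \in B I1 ->
  a5 \in B I4 ->
  c3p \in B I2 ->
  u \in B I0 ->
  v \in B I1 ->
  e x y ->
  ~~ e x b ->
  ~~ e y c ->
  ~~ e y b ->
  ~~ e x c ->
  e b c ->
  e x a5 ->
  e c c3p ->
  e x u ->
  e y u ->
  e x v ->
  e y v ->
  e b a5 ->
  e y c3p -> False.
Proof.
move=> A_x A_y H_b H_c H_a5 H_c3p H_u H_v F_x_y F_x_b F_y_c F_y_b F_x_c F_b_c F_x_a5 F_c_c3p F_x_u F_y_u F_x_v F_y_v F_b_a5 F_y_c3p.
have [O_x_nb O_x_w4 O_x_w0 O_x_w1 [O_x_n2 O_x_n3]] := A3_0 A_x.
have [O_y_nb O_y_w0 O_y_w1 O_y_w2 [O_y_n3 O_y_n4]] := A3_1 A_y.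
have F_a5_y := O_y_n4 a5 H_a5.
have F_a5_c := anti SS4 H_a5 H_c.
have F_c3p_x := O_x_n2 c3p H_c3p.
have F_c3p_b := anti SS0 H_b H_c3p.
have F_c3p_a5 := anti SS2 H_c3p H_a5.
have D_u_b : u != b by dtac.
have F_u_b : e u b := clq H_u H_b D_u_b.
have F_u_c3p := anti SS0 H_u H_c3p.
have D_v_c : v != c by dtac.
have F_v_c : e v c := clq H_v H_c D_v_c.
have F_v_a5 := anti SS4 H_a5 H_v.
by apply: (C6c (v0:=x) (v1:=y) (v2:=c3p) (v3:=c) (v4:=b) (v5:=a5)); fa.
Qed.


Lemma common0 x y : x \in A3 e B I0 -> y \in A3 e B I1 -> e x y ->
  exists2 u, u \in B I0 & e x u && e y u.
Proof.
move=> Ax Ay fxy.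
have [O_x_nb O_x_w4 O_x_w0 O_x_w1 [O_x_n2 O_x_n3]] := A3_0 Ax.
have [O_y_nb O_y_w0 O_y_w1 O_y_w2 [O_y_n3 O_y_n4]] := A3_1 Ay.
have [u Hu fxu] := O_x_w0; have [u' Hu' fyu'] := O_y_w0.
case: (boolP (e y u)) => fyu; first by exists u => //; apply/andP.
case: (boolP (e x u')) => fxu'; first by exists u' => //; apply/andP.
have fuu' := clq Hu Hu' (ne_by fxu fxu').
exfalso; have Dq1 : x != u' := out_ne O_x_nb Hu'.
have Dq2 : u != y := out_ne' O_y_nb Hu.
by apply: (C4c (a:=x) (b:=u) (c:=u') (d:=y) Dq1 Dq2); fa.
Qed.
Lemma common1 x y : x \in A3 e B I0 -> y \in A3 e B I1 -> e x y ->
  exists2 u, u \in B I1 & e x u && e y u.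
Proof.
move=> Ax Ay fxy.
have [O_x_nb O_x_w4 O_x_w0 O_x_w1 [O_x_n2 O_x_n3]] := A3_0 Ax.
have [O_y_nb O_y_w0 O_y_w1 O_y_w2 [O_y_n3 O_y_n4]] := A3_1 Ay.
have [u Hu fxu] := O_x_w1; have [u' Hu' fyu'] := O_y_w1.
case: (boolP (e y u)) => fyu; first by exists u => //; apply/andP.
case: (boolP (e x u')) => fxu'; first by exists u' => //; apply/andP.
have fuu' := clq Hu Hu' (ne_by fxu fxu').
exfalso; have Dq1 : x != u' := out_ne O_x_nb Hu'.
have Dq2 : u != y := out_ne' O_y_nb Hu.
by apply: (C4c (a:=x) (b:=u) (c:=u') (d:=y) Dq1 Dq2); fa.
Qed.

Lemma LX x y b c : x \in A3 e B I0 -> y \in A3 e B I1 -> e x y ->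
  b \in B I0 -> ~~ e x b -> c \in B I1 -> ~~ e y c -> False.
Proof.
move=> A_x A_y F_x_y H_b F_x_b H_c F_y_c.
have [O_x_nb O_x_w4 O_x_w0 O_x_w1 [O_x_n2 O_x_n3]] := A3_0 A_x.
have [O_y_nb O_y_w0 O_y_w1 O_y_w2 [O_y_n3 O_y_n4]] := A3_1 A_y.
have [a5 H_a5 F_x_a5] := O_x_w4.
have [c3p H_c3p F_c_c3p] := nbrR S1 H_c.
have [b2 H_b2 F_b_b2] := nbrR S0 H_b.
have [c1 H_c1 F_c_c1] := nbrL S0 H_c.
case: (boolP (e y b)) => F_y_b; case: (boolP (e x c)) => F_x_c;
  case: (boolP (e b c)) => F_b_c.
- by apply: (LX111 (x:=x) (y:=y) (b:=b) (c:=c) (a5:=a5) (c3p:=c3p)); fa.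
- by apply: (LX110 (x:=x) (y:=y) (b:=b) (c:=c) (a5:=a5) (c3p:=c3p) (b2:=b2) (c1:=c1)); fa.
- by apply: (LX101 (x:=x) (y:=y) (b:=b) (c:=c) (a5:=a5) (c3p:=c3p)); fa.
- by apply: (LX100 (x:=x) (y:=y) (b:=b) (c:=c) (a5:=a5) (c3p:=c3p) (b2:=b2) (c1:=c1)); fa.
- by apply: (LX011 (x:=x) (y:=y) (b:=b) (c:=c) (a5:=a5) (c3p:=c3p)); fa.
- by apply: (LX010 (x:=x) (y:=y) (b:=b) (c:=c) (a5:=a5) (c3p:=c3p) (b2:=b2) (c1:=c1)); fa.
- have [u H_u /andP[F_x_u F_y_u]] := common0 A_x A_y F_x_y.
  have [v H_v /andP[F_x_v F_y_v]] := common1 A_x A_y F_x_y.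
  case: (boolP (e b a5)) => F_b_a5; case: (boolP (e y c3p)) => F_y_c3p.
  + by apply: (LX001_11 (x:=x) (y:=y) (b:=b) (c:=c) (a5:=a5) (c3p:=c3p) (u:=u) (v:=v)); fa.
  + have [c3 H_c3 F_y_c3] := O_y_w2.
    by apply: (LX001_10 (x:=x) (y:=y) (b:=b) (c:=c) (a5:=a5) (c3p:=c3p) (u:=u) (v:=v) (c3:=c3)); fa.
  + have [b5 H_b5 F_b_b5] := nbrL S4 H_b.
    by apply: (LX001_01 (x:=x) (y:=y) (b:=b) (c:=c) (a5:=a5) (c3p:=c3p) (u:=u) (v:=v) (b5:=b5)); fa.
  + have [c3 H_c3 F_y_c3] := O_y_w2.
    have [b5 H_b5 F_b_b5] := nbrL S4 H_b.
    by apply: (LX001_00 (x:=x) (y:=y) (b:=b) (c:=c) (a5:=a5) (c3p:=c3p) (u:=u) (v:=v) (b5:=b5) (c3:=c3)); fa.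
- have [u H_u /andP[F_x_u F_y_u]] := common0 A_x A_y F_x_y.
  have [v H_v /andP[F_x_v F_y_v]] := common1 A_x A_y F_x_y.
  case: (boolP (e b a5)) => F_b_a5; case: (boolP (e y c3p)) => F_y_c3p.
  + by apply: (LX000_11 (x:=x) (y:=y) (b:=b) (c:=c) (a5:=a5) (c3p:=c3p) (u:=u) (v:=v)); fa.
  + have [c3 H_c3 F_y_c3] := O_y_w2.
    by apply: (LX000_10 (x:=x) (y:=y) (b:=b) (c:=c) (a5:=a5) (c3p:=c3p) (u:=u) (v:=v) (c3:=c3)); fa.
  + have [b5 H_b5 F_b_b5] := nbrL S4 H_b.
    by apply: (LX000_01 (x:=x) (y:=y) (b:=b) (c:=c) (a5:=a5) (c3p:=c3p) (u:=u) (v:=v) (b5:=b5)); fa.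
  + have [c3 H_c3 F_y_c3] := O_y_w2.
    have [b5 H_b5 F_b_b5] := nbrL S4 H_b.
    by apply: (LX000_00 (x:=x) (y:=y) (b:=b) (c:=c) (a5:=a5) (c3p:=c3p) (u:=u) (v:=v) (b5:=b5) (c3:=c3)); fa.
Qed.

Lemma NoXY x y : x \in A3 e B I0 -> y \in A3 e B I1 -> ~~ e x y.
Proof.
move=> Ax Ay; apply/negP => fxy.
case: maxB => _ nomax.
case: (boolP [forall (w | w \in B I0), e x w]) => [/forall_inP Cx|/forall_inPn [b Hb nxb]].
  apply: nomax; exists (addB I0 x); split; first exact: addable Ax Cx.
  by apply: addable_proper; case/A3_0: Ax.
case: (boolP [forall (w | w \in B I1), e y w]) => [/forall_inP Cy|/forall_inPn [c Hc nyc]].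
  apply: nomax; exists (addB I1 y); split; first exact: addable Ay Cy.
  by apply: addable_proper; case/A3_1: Ay.
exact: (LX Ax Ay fxy Hb nxb Hc nyc).
Qed.

Lemma main_sec (K : {set T}) : K \subset A2 e B I0 -> induced_connected e K ->
  anticomplete e K (A3 e B I0) \/ anticomplete e K (A3 e B I1).
Proof.
move=> sK cK.
case: (boolP [exists k in K, exists x in A3 e B I0, e k x]); last first.
  move=> N1; left => k x' Hk Hx'; apply/negP => h; move/negP: N1; apply.
  by apply/exists_inP; exists k => //; apply/exists_inP; exists x'.
case/exists_inP => k0 Hk0 /exists_inP [x Ax hx].
case: (boolP [exists k in K, exists y in A3 e B I1, e k y]); last first.
  move=> N2; right => k x' Hk Hx'; apply/negP => h; move/negP: N2; apply.
  by apply/exists_inP; exists k => //; apply/exists_inP; exists x'.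
case/exists_inP => k1 Hk1 /exists_inP [y Ay hy].
exfalso.
have nxy := NoXY Ax Ay.
have [O_x_nb O_x_w4 O_x_w0 O_x_w1 [O_x_n2 O_x_n3]] := A3_0 Ax.
have [O_y_nb O_y_w0 O_y_w1 O_y_w2 [O_y_n3 O_y_n4]] := A3_1 Ay.
have [a5 H_a5 F_x_a5] := O_x_w4.
have [c3 H_c3 F_y_c3] := O_y_w2.
have [d H_d F_a5_d] := nbrL S3 H_a5.
have n1 := O_x_n2 _ H_c3. have n2 := O_y_n4 _ H_a5.
have n3 := O_x_n3 _ H_d. have n4 := O_y_n3 _ H_d.
have kA k : k \in K -> k \in A2 e B I0 := fun Hk => subsetP sK k Hk.
case: (shortest cK Hk0 (sE esym hx) Hk1 (sE esym hy)).
- case=> a [Ha hxa hya].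
  have [O_a_nb O_a_w0 O_a_w1 O_a_n2 [O_a_n3 O_a_n4]] := A2_0 (kA _ Ha).
  have m1 := O_a_n2 _ H_c3; have m2 := O_a_n4 _ H_a5.
  by apply: (S5c (v0:=c3) (v1:=y) (v2:=a) (v3:=x) (v4:=a5) S2 S3 H_c3 H_a5 O_y_n3 O_a_n3 O_x_n3); fa.
- case=> a [b [[Ha Hb] [hxa hab] hyb nxb nya]].
  have [O_a_nb O_a_w0 O_a_w1 O_a_n2 [O_a_n3 O_a_n4]] := A2_0 (kA _ Ha).
  have [O_b_nb O_b_w0 O_b_w1 O_b_n2 [O_b_n3 O_b_n4]] := A2_0 (kA _ Hb).
  have m1 := O_a_n2 _ H_c3; have m2 := O_a_n4 _ H_a5.
  have m3 := O_b_n2 _ H_c3; have m4 := O_b_n4 _ H_a5.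
  by apply: (S6c (v0:=c3) (v1:=y) (v2:=b) (v3:=a) (v4:=x) (v5:=a5) S2 S3 H_c3 H_a5 O_y_n3 O_b_n3 O_a_n3 O_x_n3); fa.
- case=> a [b [c [[Ha [Hb Hc]] [hxa [hab [hbc hyc]]] [nxb nxc] [nya nyb] nac]]].
  have [O_a_nb O_a_w0 O_a_w1 O_a_n2 [O_a_n3 O_a_n4]] := A2_0 (kA _ Ha).
  have [O_b_nb O_b_w0 O_b_w1 O_b_n2 [O_b_n3 O_b_n4]] := A2_0 (kA _ Hb).
  have [O_c_nb O_c_w0 O_c_w1 O_c_n2 [O_c_n3 O_c_n4]] := A2_0 (kA _ Hc).
  have m1 := O_a_n3 _ H_d; have m2 := O_a_n4 _ H_a5.
  have m3 := O_b_n3 _ H_d; have m4 := O_b_n4 _ H_a5.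
  have m5 := O_c_n3 _ H_d; have m6 := O_c_n4 _ H_a5.
  by apply: (P7c (v0:=d) (v1:=a5) (v2:=x) (v3:=a) (v4:=b) (v5:=c) (v6:=y)); fa.
- case=> a [b [c [dd [[Ha [Hb [Hc Hdd]]] [hxa [hab [hbc hcd]]] [nxb [nxc nxd]] [nac nad] nbd]]]].
  have [O_a_nb O_a_w0 O_a_w1 O_a_n2 [O_a_n3 O_a_n4]] := A2_0 (kA _ Ha).
  have [O_b_nb O_b_w0 O_b_w1 O_b_n2 [O_b_n3 O_b_n4]] := A2_0 (kA _ Hb).
  have [O_c_nb O_c_w0 O_c_w1 O_c_n2 [O_c_n3 O_c_n4]] := A2_0 (kA _ Hc).
  have [O_d_nb O_d_w0 O_d_w1 O_d_n2 [O_d_n3 O_d_n4]] := A2_0 (kA _ Hdd).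
  have m1 := O_a_n3 _ H_d; have m2 := O_a_n4 _ H_a5.
  have m3 := O_b_n3 _ H_d; have m4 := O_b_n4 _ H_a5.
  have m5 := O_c_n3 _ H_d; have m6 := O_c_n4 _ H_a5.
  have m7 := O_d_n3 _ H_d; have m8 := O_d_n4 _ H_a5.
  by apply: (P7c (v0:=d) (v1:=a5) (v2:=x) (v3:=a) (v4:=b) (v5:=c) (v6:=dd)); fa.
Qed.

End Idx2.

End Blow.


Theorem lemma7p1 (T : finType) (e : rel T) (B : 'I_5 -> {set T})
    (i : 'I_5) (K : {set T}) :
  simple_graph e ->
  ~ has_induced_P e 7 -> ~ has_induced_C e 4 ->
  ~ has_induced_C e 6 -> ~ has_induced_C e 7 ->
  maximal_nice_blowup e B ->
  K \subset A2 e B i ->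
  induced_connected e K ->
  anticomplete e K (A3 e B i) \/ anticomplete e K (A3 e B (ordS i)).
Proof.
move=> [esym eirr] nP7 nC4 nC6 nC7 maxB sK cK.
have nB : nice_blowup e B by case: maxB.
exact: (main_sec esym eirr nB nC4 nC6 nC7 nP7 maxB sK cK).
Qed.
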